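(* Let Assumptions (A1) and (A2) from the context hold and let $\gamma>0$. Consider the estimator $$\dot{\mathbf z}(t)=-\gamma\,\mathbf z(t)+\mathbf u(t),\qquad \mathbf z(t_0)=\mathbf z_0,\qquad \mathbf x(t)=\mathbf z(t)+\boldsymbol\phi(t),$$ with input $$\mathbf u(t)=-(B\otimes I_r)\,K(t)\,\mathrm{sgn}\{(B^T\otimes I_r)\mathbf x(t)\},$$ where $K(t)\in\mathbb R^{r\ell\times r\ell}$ is diagonal with diagonal entries $\kappa_j(t)$, $j\in\{1,\dots,r\ell\}$, updated by $$\dot\kappa_j(t)=|y_j(t)|,\qquad \kappa_j(t_0)\ge 1,$$ and $\mathbf y(t)=(y_1(t),\dots,y_{r\ell}(t))^T=(B^T\otimes I_r)\mathbf x(t)$. Solutions of the resulting discontinuous system are understood in the Filippov sense. Then for every initial condition $\mathbf z_0\in\mathbb R^{nr}$ the average consensus error $\tilde{\mathbf x}(t)=\mathbf x(t)-\mathbf 1_n\otimes\bar\phi(t)$ satisfies $\lim_{t\to\infty}\tilde{\mathbf x}(t)=0$.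
   Context: There are $n$ agents $v_1,\dots,v_n$ communicating over an undirected graph $\mathcal G(\mathcal V,\mathcal E)$. Each undirected edge is regarded as two distinct directed edges, so the edge set is $\mathcal E=\{e_1,\dots,e_\ell\}\subseteq\mathcal V\times\mathcal V$. The incidence matrix $B=[b_{ij}]\in\{-1,0,1\}^{n\times\ell}$ has $b_{ij}=-1$ if edge $e_j$ leaves $v_i$, $b_{ij}=1$ if $e_j$ enters $v_i$, and $0$ otherwise (so $\mathbf 1_n^TB=0$ and the Laplacian is $L=\tfrac12BB^T$). $I_r$ is the $r\times r$ identity, $\mathbf 1_n$ the all-ones vector, $\otimes$ the Kronecker product, $(\cdot)^+$ the Moore–Penrose generalized inverse, and $M=I_n-\frac1n\mathbf 1_n\mathbf 1_n^T$. For vectors, $\mathrm{sgn}\{\cdot\}$ and $|\cdot|$ act componentwise, with $\mathrm{sgn}(0)=0$. Each agent $v_i$ has a continuously differentiable reference signal $\phi_i(t)\in\mathbb R^r$; $\boldsymbol\phi(t)=(\phi_1(t)^T,\dots,\phi_n(t)^T)^T\in\mathbb R^{nr}$ and $\bar\phi(t)=\frac1n\sum_{i=1}^n\phi_i(t)=\frac1n(\mathbf 1_n^T\otimes I_r)\boldsymbol\phi(t)$. The vector $\mathbf x(t)=(x_1(t)^T,\dots,x_n(t)^T)^T$ collects the agents' estimates of $\bar\phi(t)$. (A1) The graph $\mathcal G$ is connected and undirected. (A2) There exist constants $\varphi,\dot\varphi<\infty$ such that $\sup_{t\ge 0}\|(B^T\otimes I_r)\boldsymbol\phi(t)\|_\infty\le\varphi$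 and $\sup_{t\ge0}\|(B^T\otimes I_r)\dot{\boldsymbol\phi}(t)\|_\infty\le\dot\varphi$. Equivalently, $\|\phi_i(t)-\phi_j(t)\|_\infty\le\varphi$ and $\|\dot\phi_i(t)-\dot\phi_j(t)\|_\infty\le\dot\varphi$ for all $t$ and all $(v_i,v_j)\in\mathcal E$. *)

(* Defs.v *)
From Stdlib Require Import Reals Lra Lia Arith.
Open Scope R_scope.

Fixpoint sumR (m : nat) (f : nat -> R) : R :=
  match m with O => 0 | S m' => sumR m' f + f m' end.
Fixpoint prodR (m : nat) (f : nat -> R) : R :=
  match m with O => 1 | S m' => prodR m' f * f m' end.

Definition vec := nat -> R.
Definition mat := nat -> nat -> R.

Definition matvec (cols : nat) (A : mat) (v : vec) : vec :=
  fun a => sumR cols (fun b => A a b * v b).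
Definition transpose (A : mat) : mat := fun a b => A b a.
Definition eye : mat := fun a b => if Nat.eqb a b then 1 else 0.
Definition ones : mat := fun _ _ => 1.
Definition kron (p q : nat) (A Bm : mat) : mat :=
  fun a b => A (a / p)%nat (b / q)%nat * Bm (a mod p)%nat (b mod q)%nat.

Definition sgnR (x : R) : R :=
  if Rlt_dec 0 x then 1 else if Rlt_dec x 0 then -1 else 0.

Definition incidence (src dst : nat -> nat) : mat :=
  fun i j => if Nat.eqb (dst j) i then 1 else if Nat.eqb (src j) i then -1 else 0.

Inductive reach (ell : nat) (src dst : nat -> nat) (i : nat) : nat -> Prop :=
| reach_refl : reach ell src dst i i
| reach_step : forall j k e, reach ell src dst i j -> (e < ell)%nat ->
    src e = j -> dst e = k -> reach ell src dst i k.

(* (A1): the edge list describes a connected undirected graph on n vertices,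
   each undirected edge being present as two distinct directed edges. *)
Definition connected_undirected (n ell : nat) (src dst : nat -> nat) : Prop :=
  (forall j, (j < ell)%nat -> (src j < n)%nat /\ (dst j < n)%nat /\ src j <> dst j) /\
  (forall j j', (j < ell)%nat -> (j' < ell)%nat -> src j = src j' -> dst j = dst j' -> j = j') /\
  (forall j, (j < ell)%nat -> exists j', (j' < ell)%nat /\ src j' = dst j /\ dst j' = src j) /\
  (forall i k, (i < n)%nat -> (k < n)%nat -> reach ell src dst i k).

(* ---------- Filippov machinery on R^D (vectors: first D coordinates) ---------- *)
Definition vdist (D : nat) (a b : vec) : R := sqrt (sumR D (fun k => (a k - b k) ^ 2)).

Definition closedD (D : nat) (C : vec -> Prop) : Prop :=
  forall d, (forall eps, eps > 0 -> exists c, C c /\ vdist D c d < eps) -> C d.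
Definition convexD (C : vec -> Prop) : Prop :=
  forall a b lam, C a -> C b -> 0 <= lam <= 1 -> C (fun k => lam * a k + (1 - lam) * b k).
Definition clconv (D : nat) (S : vec -> Prop) (d : vec) : Prop :=
  forall C, closedD D C -> convexD C -> (forall v, S v -> C v) -> C d.

Definition nullD (D : nat) (N : vec -> Prop) : Prop :=
  forall eps, eps > 0 -> exists lo hi : nat -> nat -> R,
    (forall k i, lo k i <= hi k i) /\
    (forall v, N v -> exists k, forall i, (i < D)%nat -> lo k i <= v i <= hi k i) /\
    (forall K, sumR K (fun k => prodR D (fun i => hi k i - lo k i)) <= eps).

Definition filippov_set (D : nat) (f : vec -> vec) (w d : vec) : Prop :=
  forall delta N, delta > 0 -> nullD D N ->
    clconv D (fun s => exists v, vdist D v w < delta /\ ~ N v /\ s = f v) d.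

Definition abs_cont (g : R -> R) (a b : R) : Prop :=
  forall eps, eps > 0 -> exists delta, delta > 0 /\
    forall (m : nat) (al bl : nat -> R),
      (forall k, (k < m)%nat -> a <= al k /\ al k <= bl k /\ bl k <= b) ->
      (forall k, (S k < m)%nat -> bl k <= al (S k)) ->
      sumR m (fun k => bl k - al k) < delta ->
      sumR m (fun k => Rabs (g (bl k) - g (al k))) < eps.

Definition filippov_solution (D : nat) (F : R -> vec -> vec) (t0 : R) (w : R -> vec) : Prop :=
  (forall T, T > t0 -> forall k, (k < D)%nat -> abs_cont (fun s => w s k) t0 T) /\
  exists Z : R -> Prop, nullD 1 (fun v => Z (v O)) /\
    forall t, t > t0 -> ~ Z t -> exists d : vec,
      (forall k, (k < D)%nat -> derivable_pt_lim (fun s => w s k) t (d k)) /\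
      filippov_set D (F t) (w t) d.

(* B (x) I_r : (n r) x (ell r);  B^T (x) I_r : (ell r) x (n r) *)
Definition BI (r : nat) (src dst : nat -> nat) : mat := kron r r (incidence src dst) eye.
Definition BTI (r : nat) (src dst : nat -> nat) : mat :=
  kron r r (transpose (incidence src dst)) eye.

(* state w = (z ; kappa), z in R^{nr} (indices < n r), kappa in R^{r ell}
   (index n r + j holds kappa_j). *)
Definition est_y (n r : nat) (src dst : nat -> nat) (phi : R -> vec) (t : R) (w : vec) : vec :=
  matvec (n * r) (BTI r src dst) (fun k => w k + phi t k).

Definition est_u (n r ell : nat) (src dst : nat -> nat) (phi : R -> vec) (t : R) (w : vec) : vec :=
  fun a => - matvec (ell * r) (BI r src dst)
             (fun b => w (n * r + b)%nat * sgnR (est_y n r src dst phi t w b)) a.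

Definition est_field (n r ell : nat) (src dst : nat -> nat) (gamma : R) (phi : R -> vec)
  (t : R) (w : vec) : vec :=
  fun k => if Nat.ltb k (n * r) then - gamma * w k + est_u n r ell src dst phi t w k
           else if Nat.ltb k (n * r + ell * r) then Rabs (est_y n r src dst phi t w (k - n * r)%nat)
           else 0.

Definition phibar (n r : nat) (phi : R -> vec) (t : R) : vec :=
  fun p => / INR n * matvec (n * r) (kron r r ones eye) (phi t) p.
Definition xtilde (n r : nat) (phi : R -> vec) (w : R -> vec) (t : R) : vec :=
  fun k => (w t k + phi t k) - matvec r (kron r r ones eye) (phibar n r phi t) k.

(* Main.v *)
Require Import Defs.
From Stdlib Require Import Reals Lra Lia Arith Classical ClassicalEpsilon.
Open Scope R_scope.

Lemma sumR_ext m f g : (forall i, (i < m)%nat -> f i = g i) -> sumR m f = sumR m g.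
Proof. induction m; simpl; intros H; auto. rewrite IHm by (intros; apply H; lia). rewrite H by lia; auto. Qed.

Lemma sumR_plus m f g : sumR m (fun i => f i + g i) = sumR m f + sumR m g.
Proof. induction m; simpl; [lra|rewrite IHm; lra]. Qed.

Lemma sumR_minus m f g : sumR m (fun i => f i - g i) = sumR m f - sumR m g.
Proof. induction m; simpl; [lra|rewrite IHm; lra]. Qed.

Lemma sumR_scal m c f : sumR m (fun i => c * f i) = c * sumR m f.
Proof. induction m; simpl; [lra|rewrite IHm; lra]. Qed.

Lemma sumR_zero m : sumR m (fun _ => 0) = 0.
Proof. induction m; simpl; [lra|rewrite IHm; lra]. Qed.

Lemma sumR_le m f g : (forall i, (i < m)%nat -> f i <= g i) -> sumR m f <= sumR m g.
Proof. induction m; simpl; intros H; [lra|]. assert (f m <= g m) by (apply H; lia).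
  assert (sumR m f <= sumR m g) by (apply IHm; intros; apply H; lia). lra. Qed.

Lemma sumR_nonneg m f : (forall i, (i < m)%nat -> 0 <= f i) -> 0 <= sumR m f.
Proof. intros H. rewrite <- (sumR_zero m). apply sumR_le; auto. Qed.

Lemma sumR_abs m f : Rabs (sumR m f) <= sumR m (fun i => Rabs (f i)).
Proof. induction m; simpl. rewrite Rabs_R0; lra.
  eapply Rle_trans; [apply Rabs_triang|]. lra. Qed.

Lemma sumR_ge_term m f k : (forall i, (i < m)%nat -> 0 <= f i) -> (k < m)%nat -> f k <= sumR m f.
Proof. induction m; simpl; intros H Hk; [lia|].
  destruct (Nat.eq_dec k m). subst. assert (0 <= sumR m f) by (apply sumR_nonneg; intros; apply H; lia). lra.
  assert (f k <= sumR m f) by (apply IHm; [intros; apply H; lia|lia]). assert (0 <= f m) by (apply H; lia). lra. Qed.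

Lemma sumR_swap m l (f : nat -> nat -> R) :
  sumR m (fun i => sumR l (fun j => f i j)) = sumR l (fun j => sumR m (fun i => f i j)).
Proof. induction m; simpl. rewrite sumR_zero; auto. rewrite IHm, <- sumR_plus; auto. Qed.

Lemma sumR_add m l f : sumR (m + l) f = sumR m f + sumR l (fun i => f (m + i)%nat).
Proof. induction l; simpl. rewrite Nat.add_0_r; lra. rewrite Nat.add_succ_r; simpl. rewrite IHl; lra. Qed.

Lemma sumR_mul_split m r f : sumR (m * r) f = sumR m (fun a => sumR r (fun q => f (a * r + q)%nat)).
Proof. induction m; simpl; auto. replace (r + m * r)%nat with (m * r + r)%nat by lia.
  rewrite sumR_add, IHm; auto. Qed.

Lemma sumR_delta m k h : (k < m)%nat -> sumR m (fun i => if Nat.eqb k i then h i else 0) = h k.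
Proof. induction m; simpl; intros Hk; [lia|].
  destruct (Nat.eq_dec k m). subst. rewrite Nat.eqb_refl.
  rewrite (sumR_ext m _ (fun _ => 0)). rewrite sumR_zero; lra. intros i Hi. destruct (Nat.eqb_spec m i); [lia|auto].
  destruct (Nat.eqb_spec k m); [lia|]. rewrite IHm by lia. lra. Qed.

Lemma sumR_mul_distr_r m f c : sumR m f * c = sumR m (fun i => f i * c).
Proof. induction m; simpl; [lra|rewrite <- IHm; lra]. Qed.


Lemma vdist_coord D a b k : (k < D)%nat -> Rabs (a k - b k) <= vdist D a b.
Proof. intros Hk. unfold vdist.
  rewrite <- sqrt_Rsqr_abs. apply sqrt_le_1_alt. unfold Rsqr.
  replace ((a k - b k) * (a k - b k)) with ((a k - b k)^2) by ring.
  apply (sumR_ge_term D (fun k => (a k - b k)^2)); auto. intros; apply pow2_ge_0. Qed.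

Lemma vdist_nonneg D a b : 0 <= vdist D a b.
Proof. apply sqrt_pos. Qed.

Lemma vdist_sym D a b : vdist D a b = vdist D b a.
Proof. unfold vdist. f_equal. apply sumR_ext. intros; ring. Qed.

Lemma Rabs_le_between x y : Rabs x <= y -> - y <= x <= y.
Proof. unfold Rabs; destruct Rcase_abs; lra. Qed.

Lemma nullD_empty D : (D > 0)%nat -> nullD D (fun _ => False).
Proof. intros HD eps He. exists (fun _ _ => 0), (fun _ _ => 0). split; [intros; lra|split].
  intros v [].
  intros K. rewrite (sumR_ext K _ (fun _ => 0)). rewrite sumR_zero; lra.
  intros i _. destruct D; [lia|]. simpl. ring. Qed.

Lemma fil_half D f w d (l : vec -> R) L M δ :
  (D > 0)%nat -> filippov_set D f w d -> δ > 0 -> 0 <= L ->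
  (forall a b lam, l (fun k => lam * a k + (1-lam) * b k) = lam * l a + (1-lam) * l b) ->
  (forall a b, Rabs (l a - l b) <= L * vdist D a b) ->
  (forall v, vdist D v w < δ -> l (f v) <= M) -> l d <= M.
Proof.
  intros HD Hf Hd HL Hlin Hlip Hv.
  specialize (Hf δ (fun _ => False) Hd (nullD_empty D HD)).
  apply (Hf (fun c => l c <= M)).
  - intros d' Happ. apply Rnot_gt_le. intros Hgt.
    destruct (Happ ((l d' - M) / (L + 1))) as [c [Hc Hcd]].
    { apply Rdiv_lt_0_compat; lra. }
    set (e := (l d' - M) / (L + 1)) in *.
    assert (He : e * (L + 1) = l d' - M) by (unfold e; field; lra).
    assert (Hep : e > 0) by (unfold e; apply Rdiv_lt_0_compat; lra).
    specialize (Hlip d' c). rewrite vdist_sym in Hlip.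
    assert (L * vdist D c d' <= L * e) by (apply Rmult_le_compat_l; lra).
    apply Rabs_le_between in Hlip. nra.
  - intros a b lam Ha Hb Hlam. rewrite Hlin. nra.
  - intros s [v [Hvd [_ ->]]]. apply Hv; auto.
Qed.


Definition ilen (al bl L H : R) := Rmax 0 (Rmin bl H - Rmax al L).

Ltac mm := repeat (unfold Rmax, Rmin in *; repeat match goal with |- context [Rle_dec ?x ?y] => destruct (Rle_dec x y) end;
  repeat match goal with H : context [Rle_dec ?x ?y] |- _ => destruct (Rle_dec x y) end); try lra.

Lemma ilen_nonneg a b L H : 0 <= ilen a b L H.
Proof. unfold ilen; mm. Qed.

Lemma ilen_in a b L H : L <= a -> a <= b -> b <= H -> ilen a b L H = b - a.
Proof. intros; unfold ilen; mm. Qed.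

Lemma ilen_step c a b L H : c <= a -> a <= b ->
  Rmax 0 (Rmin c H - L) + ilen a b L H <= Rmax 0 (Rmin b H - L).
Proof. intros; unfold ilen; mm. Qed.

Lemma ilen_sorted m al bl L H : L <= H ->
  (forall i, (i < m)%nat -> al i <= bl i) -> (forall i, (S i < m)%nat -> bl i <= al (S i)) ->
  sumR m (fun i => ilen (al i) (bl i) L H) <= H - L.
Proof.
  intros HLH Hab Hs.
  assert (Hgen : forall m', (m' <= m)%nat -> sumR m' (fun i => ilen (al i) (bl i) L H) <=
     match m' with O => 0 | S q => Rmax 0 (Rmin (bl q) H - L) end).
  { induction m'; intros Hm; simpl; [lra|].
    destruct m'.
    - simpl. assert (H1 := ilen_step (al 0%nat) (al 0%nat) (bl 0%nat) L H). 
      assert (al 0%nat <= bl 0%nat) by (apply Hab; lia).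
      assert (0 <= Rmax 0 (Rmin (al 0%nat) H - L)) by (unfold Rmax; mm). lra.
    - assert (IH := IHm' ltac:(lia)). simpl in IH.
      assert (H1 := ilen_step (bl m') (al (S m')) (bl (S m')) L H (Hs m' ltac:(lia)) (Hab (S m') ltac:(lia))).
      simpl. lra. }
  specialize (Hgen m (le_n m)). destruct m; simpl in *; [lra|]. unfold Rmax, Rmin in *; mm.
Qed.

Lemma cover_len m al bl (Lk Hk : nat -> R) K :
  (forall k, Lk k <= Hk k) ->
  (forall i, (i < m)%nat -> al i <= bl i) -> (forall i, (S i < m)%nat -> bl i <= al (S i)) ->
  (forall i, (i < m)%nat -> exists k, (k < K)%nat /\ Lk k <= al i /\ bl i <= Hk k) ->
  sumR m (fun i => bl i - al i) <= sumR K (fun k => Hk k - Lk k).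
Proof.
  intros HLH Hab Hs Hc.
  apply Rle_trans with (sumR m (fun i => sumR K (fun k => ilen (al i) (bl i) (Lk k) (Hk k)))).
  - apply sumR_le. intros i Hi. destruct (Hc i Hi) as [k [Hk1 [Hk2 Hk3]]].
    rewrite <- (ilen_in (al i) (bl i) (Lk k) (Hk k)) by (auto; apply Hab; auto).
    apply (sumR_ge_term K (fun k => ilen (al i) (bl i) (Lk k) (Hk k))); auto.
    intros; apply ilen_nonneg.
  - rewrite sumR_swap. apply sumR_le. intros k _. apply ilen_sorted; auto.
Qed.

Lemma geom_sum K : sumR K (fun k => (/2)^k) = 2 - 2 * (/2)^K.
Proof. induction K; simpl; [lra|]. rewrite IHK. field. Qed.

Lemma geom_pos k : 0 < (/2)^k.
Proof. apply pow_lt; lra. Qed.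

Lemma fin_bound (P : nat -> nat -> Prop) m :
  (forall i, (i < m)%nat -> exists k, P i k) -> exists K, forall i, (i < m)%nat -> exists k, (k < K)%nat /\ P i k.
Proof.
  induction m; intros H. exists 0%nat; intros; lia.
  destruct IHm as [K HK]. intros; apply H; lia.
  destruct (H m ltac:(lia)) as [k0 Hk0].
  exists (S (Nat.max K k0)). intros i Hi. destruct (Nat.eq_dec i m).
  subst. exists k0; split; auto; lia.
  destruct (HK i ltac:(lia)) as [k [Hk1 Hk2]]. exists k; split; auto; lia.
Qed.


Definition null1 (Z : R -> Prop) : Prop :=
  forall eps, eps > 0 -> exists lo hi : nat -> R, (forall k, lo k <= hi k) /\
    (forall t, Z t -> exists k, lo k <= t <= hi k) /\
    (forall K, sumR K (fun k => hi k - lo k) <= eps).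

Section Mono.
Variables (g : R -> R) (a b : R) (Z : R -> Prop).
Hypothesis Hab : a <= b.
Hypothesis HZ : null1 Z.
Hypothesis HAC : abs_cont g a b.
Hypothesis Hder : forall t, a <= t <= b -> ~ Z t -> exists l, derivable_pt_lim g t l /\ l <= 0.

Variable eps : R.
Hypothesis Heps : eps > 0.

Definition Pc (Lk Hk : nat -> R) (x : R) : Prop :=
  exists m al bl, (forall i, (i < m)%nat -> a <= al i /\ al i <= bl i /\ bl i <= x) /\
    (forall i, (S i < m)%nat -> bl i <= al (S i)) /\
    (forall i, (i < m)%nat -> exists k, Lk k < al i /\ bl i < Hk k) /\
    g x - g a <= eps * (x - a) + sumR m (fun i => Rabs (g (bl i) - g (al i))).

Lemma Pc_a Lk Hk : Pc Lk Hk a.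
Proof. exists 0%nat, (fun _ => 0), (fun _ => 0). repeat split; intros; try lia. simpl; lra. Qed.

Lemma Pc_mono Lk Hk x y : Pc Lk Hk x -> x <= y -> g y - g x <= eps * (y - x) -> Pc Lk Hk y.
Proof. intros [m [al [bl [H1 [H2 [H3 H4]]]]]] Hxy Hg. exists m, al, bl. split; [|split; [|split]]; auto.
  intros i Hi; destruct (H1 i Hi); lra. lra. Qed.

Lemma Pc_app Lk Hk u y k : Pc Lk Hk u -> a <= u -> u <= y -> Lk k < u -> y < Hk k -> Pc Lk Hk y.
Proof. intros [m [al [bl [H1 [H2 [H3 H4]]]]]] Hau Huy HL HH.
  exists (S m), (fun i => if Nat.eqb i m then u else al i), (fun i => if Nat.eqb i m then y else bl i).
  split; [|split; [|split]].
  - intros i Hi. destruct (Nat.eqb_spec i m); [lra|]. destruct (H1 i ltac:(lia)); lra.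
  - intros i Hi. destruct (Nat.eqb_spec i m); [lia|]. destruct (Nat.eqb_spec (S i) m).
    subst. destruct (H1 i ltac:(lia)); lra. apply H2; lia.
  - intros i Hi. destruct (Nat.eqb_spec i m). exists k; lra. apply H3; lia.
  - simpl. rewrite Nat.eqb_refl. rewrite (sumR_ext m _ (fun i => Rabs (g (bl i) - g (al i)))).
    assert (Rabs (g u - g y) = Rabs (g y - g u)) by (apply Rabs_minus_sym).
    assert (g y - g u <= Rabs (g y - g u)) by apply Rle_abs.
    rewrite Rabs_minus_sym. nra.
    intros i Hi. destruct (Nat.eqb_spec i m); [lia|auto].
Qed.
End Mono.


Lemma der_bound f x l e : derivable_pt_lim f x l -> e > 0 -> exists η, η > 0 /\
  (forall y, x <= y < x + η -> f y - f x <= (l + e) * (y - x)) /\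
  (forall y, x - η < y <= x -> f x - f y <= (l + e) * (x - y)).
Proof.
  intros Hd He. destruct (Hd e He) as [δ Hδ]. exists δ. split; [apply cond_pos|]. split.
  - intros y Hy. destruct (Req_dec y x) as [->|Hne]. lra.
    specialize (Hδ (y - x) ltac:(lra) ltac:(rewrite Rabs_right; lra)).
    replace (x + (y - x)) with y in Hδ by ring.
    apply Rabs_def2 in Hδ. 
    set (q := (f y - f x) / (y - x)) in *.
    assert (f y - f x = q * (y - x)) by (unfold q; field; lra). nra.
  - intros y Hy. destruct (Req_dec y x) as [->|Hne]. lra.
    specialize (Hδ (y - x) ltac:(lra) ltac:(rewrite Rabs_left; lra)).
    replace (x + (y - x)) with y in Hδ by ring.
    apply Rabs_def2 in Hδ.
    set (q := (f y - f x) / (y - x)) in *.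
    assert (f y - f x = q * (y - x)) by (unfold q; field; lra). nra.
Qed.

Lemma Pc_step g a b Z eps Lk Hk x :
  eps > 0 -> 
  (forall t, a <= t <= b -> ~ Z t -> exists l, derivable_pt_lim g t l /\ l <= 0) ->
  (forall t, Z t -> exists k, Lk k < t < Hk k) ->
  a <= x <= b -> (forall y, a <= y < x -> Pc g a eps Lk Hk y) ->
  exists η, η > 0 /\ forall y, a <= y <= b -> y < x + η -> Pc g a eps Lk Hk y.
Proof.
  intros Heps Hder HZc Hx Hbel.
  destruct (classic (Z x)) as [Zx|nZx].
  - destruct (HZc x Zx) as [k [hL hH]].
    exists (Hk k - x). split; [lra|].
    set (u := Rmax a ((Lk k + x)/2)).
    assert (Hu1 : a <= u) by apply Rmax_l.
    assert (Hu2 : (Lk k + x)/2 <= u) by apply Rmax_r.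
    assert (Hu3 : u <= x) by (unfold u; apply Rmax_lub; lra).
    assert (Pu : Pc g a eps Lk Hk u).
    { destruct (Rlt_dec u x). apply Hbel; lra.
      assert (u = a) by (unfold u in *; unfold Rmax in *; destruct (Rle_dec a ((Lk k + x)/2)); lra).
      rewrite H; apply Pc_a. }
    intros y Hy Hyx. destruct (Rlt_dec y x). apply Hbel; lra.
    apply (Pc_app g a eps Heps Lk Hk u y k); auto; lra.
  - destruct (Hder x Hx nZx) as [l [Hd Hl]].
    destruct (der_bound g x l eps Hd Heps) as [η [Hη [Hr Hlf]]].
    assert (Px : Pc g a eps Lk Hk x).
    { destruct (Req_dec x a) as [->|Hne]. apply Pc_a.
      set (u := Rmax a (x - η/2)).
      assert (Hu1 : a <= u) by apply Rmax_l.
      assert (Hu2 : x - η/2 <= u) by apply Rmax_r.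
      assert (Hu3 : u < x) by (unfold u; unfold Rmax; destruct (Rle_dec a (x - η/2)); lra).
      apply (Pc_mono g a eps Lk Hk u x); [apply Hbel; lra|lra|].
      specialize (Hlf u ltac:(lra)). nra. }
    exists η. split; auto. intros y Hy Hyx. destruct (Rlt_dec y x). apply Hbel; lra.
    apply (Pc_mono g a eps Lk Hk x y Px); [lra|]. specialize (Hr y ltac:(lra)). nra.
Qed.

Lemma Pc_all g a b Z eps Lk Hk :
  eps > 0 -> a <= b ->
  (forall t, a <= t <= b -> ~ Z t -> exists l, derivable_pt_lim g t l /\ l <= 0) ->
  (forall t, Z t -> exists k, Lk k < t < Hk k) ->
  Pc g a eps Lk Hk b.
Proof.
  intros Heps Hab Hder HZc.
  set (A := fun x => a <= x <= b /\ forall y, a <= y <= x -> Pc g a eps Lk Hk y).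
  assert (Hbd : bound A) by (exists b; intros x [Hx _]; lra).
  assert (Hne : exists x, A x).
  { exists a. split; [lra|]. intros y Hy. replace y with a by lra. apply Pc_a. }
  destruct (completeness A Hbd Hne) as [s [Hub Hlub]].
  assert (Has : a <= s) by (apply Hub; destruct Hne; split; [lra|]; intros y Hy; replace y with a by lra; apply Pc_a).
  assert (Hsb : s <= b) by (apply Hlub; intros x [Hx _]; lra).
  assert (Hbel : forall y, a <= y < s -> Pc g a eps Lk Hk y).
  { intros y Hy. apply NNPP. intros Hn.
    assert (s <= y). apply Hlub. intros x [Hx Hx2]. apply Rnot_gt_le. intros Hxy. apply Hn. apply Hx2; lra.
    lra. }
  destruct (Pc_step g a b Z eps Lk Hk s Heps Hder HZc ltac:(lra) Hbel) as [η [Hη Hst]].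
  destruct (Rlt_dec s b).
  - exfalso. set (y := Rmin b (s + η/2)).
    assert (y <= b) by apply Rmin_l. assert (y <= s + η/2) by apply Rmin_r.
    assert (s < y) by (unfold y, Rmin; destruct (Rle_dec b (s + η/2)); lra).
    assert (A y). { split; [lra|]. intros z Hz. apply Hst; lra. }
    specialize (Hub y H2). lra.
  - apply Hst; lra.
Qed.

Lemma mono g a b Z : a <= b -> null1 Z -> abs_cont g a b ->
  (forall t, a <= t <= b -> ~ Z t -> exists l, derivable_pt_lim g t l /\ l <= 0) ->
  g b <= g a.
Proof.
  intros Hab HZ HAC Hder.
  assert (Heps : forall eps, eps > 0 -> g b - g a <= eps * (b - a) + eps).
  { intros eps Heps.
    destruct (HAC eps Heps) as [δ [Hδ Hac]].
    destruct (HZ (δ/4) ltac:(lra)) as [lo [hi [Hlh [Hcov Hsum]]]].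
    set (Lk := fun k => lo k - δ/8 * (/2)^k). set (Hk := fun k => hi k + δ/8 * (/2)^k).
    assert (HZc : forall t, Z t -> exists k, Lk k < t < Hk k).
    { intros t Zt. destruct (Hcov t Zt) as [k Hk']. exists k. unfold Lk, Hk.
      assert (0 < (/2)^k) by apply geom_pos. nra. }
    destruct (Pc_all g a b Z eps Lk Hk Heps Hab Hder HZc) as [m [al [bl [H1 [H2 [H3 H4]]]]]].
    destruct (fin_bound (fun i k => Lk k < al i /\ bl i < Hk k) m H3) as [K HK].
    assert (Hlen : sumR m (fun i => bl i - al i) <= sumR K (fun k => Hk k - Lk k)).
    { apply cover_len.
      - intros k. unfold Lk, Hk. specialize (Hlh k). assert (0 < (/2)^k) by apply geom_pos. nra.
      - intros i Hi; destruct (H1 i Hi); lra.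
      - auto.
      - intros i Hi. destruct (HK i Hi) as [k [Hk1 [Hk2 Hk3]]]. exists k; repeat split; auto; lra. }
    assert (HK2 : sumR K (fun k => Hk k - Lk k) = sumR K (fun k => hi k - lo k) + δ/4 * sumR K (fun k => (/2)^k)).
    { unfold Hk, Lk. rewrite <- sumR_scal, <- sumR_plus. apply sumR_ext; intros. lra. }
    rewrite geom_sum in HK2. specialize (Hsum K). assert (0 < (/2)^K) by apply geom_pos.
    assert (Hs : sumR m (fun i => Rabs (g (bl i) - g (al i))) < eps).
    { apply Hac. intros i Hi; destruct (H1 i Hi); repeat split; lra. auto. nra. }
    lra. }
  apply Rnot_gt_le. intros Hgt.
  set (e := (g b - g a) / (b - a + 2)).
  assert (He : e * (b - a + 2) = g b - g a) by (unfold e; field; lra).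
  assert (Hep : e > 0) by (unfold e; apply Rdiv_lt_0_compat; lra).
  specialize (Heps e Hep). nra.
Qed.


Lemma ac_restrict g t0 T a b : abs_cont g t0 T -> t0 <= a -> b <= T -> abs_cont g a b.
Proof. intros H Ha Hb eps He. destruct (H eps He) as [δ [Hδ Hd]]. exists δ; split; auto.
  intros m al bl H1 H2 H3. apply Hd; auto. intros k Hk; destruct (H1 k Hk); lra. Qed.

Lemma ac_plus f g a b : abs_cont f a b -> abs_cont g a b -> abs_cont (fun t => f t + g t) a b.
Proof. intros Hf Hg eps He. destruct (Hf (eps/2) ltac:(lra)) as [d1 [Hd1 H1]].
  destruct (Hg (eps/2) ltac:(lra)) as [d2 [Hd2 H2]].
  exists (Rmin d1 d2). split. apply Rmin_glb_lt; auto.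
  intros m al bl Ha Hs Hl. assert (Rmin d1 d2 <= d1) by apply Rmin_l. assert (Rmin d1 d2 <= d2) by apply Rmin_r.
  specialize (H1 m al bl Ha Hs ltac:(lra)). specialize (H2 m al bl Ha Hs ltac:(lra)).
  eapply Rle_lt_trans with (sumR m (fun k => Rabs (f (bl k) - f (al k))) + sumR m (fun k => Rabs (g (bl k) - g (al k)))).
  rewrite <- sumR_plus. apply sumR_le. intros. eapply Rle_trans; [|apply Rabs_triang]. right; f_equal; ring. lra. Qed.

Lemma ac_scal c f a b : abs_cont f a b -> abs_cont (fun t => c * f t) a b.
Proof. intros Hf eps He. destruct (Hf (eps / (Rabs c + 1))) as [d [Hd H1]].
  apply Rdiv_lt_0_compat; [lra| assert (0 <= Rabs c) by apply Rabs_pos; lra].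
  exists d; split; auto. intros m al bl Ha Hs Hl. specialize (H1 m al bl Ha Hs Hl).
  assert (0 <= Rabs c) by apply Rabs_pos.
  rewrite (sumR_ext m _ (fun k => Rabs c * Rabs (f (bl k) - f (al k)))).
  rewrite sumR_scal. 
  set (e := eps / (Rabs c + 1)) in *. assert (e * (Rabs c + 1) = eps) by (unfold e; field; lra).
  assert (0 <= sumR m (fun k => Rabs (f (bl k) - f (al k)))) by (apply sumR_nonneg; intros; apply Rabs_pos).
  nra.
  intros. rewrite <- Rabs_mult. f_equal; ring. Qed.

Lemma ac_const c a b : abs_cont (fun _ => c) a b.
Proof. intros eps He. exists 1; split; [lra|]. intros m al bl _ _ _.
  rewrite (sumR_ext m _ (fun _ => 0)). rewrite sumR_zero; lra. intros; replace (c - c) with 0 by ring; apply Rabs_R0. Qed.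

Lemma ac_ext f g a b : (forall t, a <= t <= b -> f t = g t) -> abs_cont f a b -> abs_cont g a b.
Proof. intros He Hf eps Heps. destruct (Hf eps Heps) as [d [Hd H1]]. exists d; split; auto.
  intros m al bl Ha Hs Hl. rewrite <- (sumR_ext m (fun k => Rabs (f (bl k) - f (al k)))). auto.
  intros k Hk. destruct (Ha k Hk). rewrite !He by lra; auto. Qed.

Lemma ac_sum m f a b : (forall i, (i < m)%nat -> abs_cont (f i) a b) -> abs_cont (fun t => sumR m (fun i => f i t)) a b.
Proof. induction m; intros H; simpl. apply ac_const. apply (ac_plus (fun t => sumR m (fun i => f i t)) (f m)).
  apply IHm; intros; apply H; lia. apply H; lia. Qed.

Lemma ac_lip g a b L : 0 <= L -> (forall x y, a <= x <= b -> a <= y <= b -> Rabs (g y - g x) <= L * Rabs (y - x)) -> abs_cont g a b.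
Proof. intros HL Hl eps He. exists (eps / (L + 1)). split. apply Rdiv_lt_0_compat; lra.
  intros m al bl Ha Hs Hsum.
  apply Rle_lt_trans with (L * sumR m (fun k => bl k - al k)).
  rewrite <- sumR_scal. apply sumR_le. intros k Hk. destruct (Ha k Hk) as [h1 [h2 h3]].
  rewrite <- (Rabs_right (bl k - al k)) by lra. apply Hl; lra.
  set (e := eps / (L + 1)) in *. assert (e * (L + 1) = eps) by (unfold e; field; lra).
  assert (0 <= sumR m (fun k => bl k - al k)) by (apply sumR_nonneg; intros k Hk; destruct (Ha k Hk); lra).
  assert (e > 0) by (unfold e; apply Rdiv_lt_0_compat; lra).
  assert (L * sumR m (fun k => bl k - al k) <= L * e) by (apply Rmult_le_compat_l; lra).
  nra. Qed.

Lemma ac_bounded g a b : a <= b -> abs_cont g a b -> exists M, forall x, a <= x <= b -> Rabs (g x) <= M.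
Proof. intros Hab Hg. destruct (Hg 1 ltac:(lra)) as [d [Hd H1]].
  assert (Hind : forall N, forall x, a <= x <= b -> x <= a + INR N * (d/2) -> Rabs (g x - g a) <= INR N).
  { induction N; intros x Hx Hxn.
    - simpl in Hxn. replace x with a by lra. replace (g a - g a) with 0 by ring. rewrite Rabs_R0; simpl; lra.
    - rewrite S_INR in *. destruct (Rle_dec x (a + INR N * (d/2))). specialize (IHN x Hx r). lra. apply Rnot_le_lt in n.
      set (y := a + INR N * (d/2)). assert (0 <= INR N) by apply pos_INR.
      assert (0 <= INR N * (d/2)) by (apply Rmult_le_pos; lra). assert (Hy : a <= y) by (unfold y; lra).
      assert (Hyy: a <= y <= b) by (unfold y; lra). specialize (IHN y Hyy ltac:(unfold y; lra)).
      specialize (H1 1%nat (fun _ => y) (fun _ => x)). simpl in H1.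
      assert (Rabs (g x - g y) < 1). { assert (Hq := H1 ltac:(intros; unfold y in *; lra) ltac:(intros; lia) ltac:(unfold y in *; lra)). lra. }
      assert (Rabs (g x - g a) <= Rabs (g x - g y) + Rabs (g y - g a)) by (eapply Rle_trans; [|apply Rabs_triang]; right; f_equal; ring).
      lra. }
  destruct (INR_unbounded ((b - a) / (d/2))) as [N HN].
  exists (INR N + Rabs (g a)). intros x Hx. specialize (Hind N x Hx).
  assert ((b - a) / (d/2) * (d/2) = b - a) by (field; lra).
  assert (Rabs (g x - g a) <= INR N) by (apply Hind; nra).
  assert (Rabs (g x) <= Rabs (g x - g a) + Rabs (g a)) by (eapply Rle_trans; [|apply Rabs_triang]; right; f_equal; ring).
  lra. Qed.

Lemma ac_dom h f g a b M : 0 <= M -> abs_cont f a b -> abs_cont g a b ->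
  (forall x y, a <= x <= y -> y <= b -> Rabs (h y - h x) <= M * (Rabs (f y - f x) + Rabs (g y - g x))) ->
  abs_cont h a b.
Proof. intros HM Hf Hg Hd eps He.
  set (e := eps / (2 * M + 2)). assert (Hep : e > 0) by (unfold e; apply Rdiv_lt_0_compat; lra).
  assert (Hee : e * (2 * M + 2) = eps) by (unfold e; field; lra).
  destruct (Hf e Hep) as [d1 [Hd1 H1]]. destruct (Hg e Hep) as [d2 [Hd2 H2]].
  exists (Rmin d1 d2). split. apply Rmin_glb_lt; auto.
  intros m al bl Ha Hs Hl. assert (Rmin d1 d2 <= d1) by apply Rmin_l. assert (Rmin d1 d2 <= d2) by apply Rmin_r.
  specialize (H1 m al bl Ha Hs ltac:(lra)). specialize (H2 m al bl Ha Hs ltac:(lra)).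
  apply Rle_lt_trans with (M * (sumR m (fun k => Rabs (f (bl k) - f (al k))) + sumR m (fun k => Rabs (g (bl k) - g (al k))))).
  rewrite <- sumR_plus, <- sumR_scal. apply sumR_le. intros k Hk. destruct (Ha k Hk). apply Hd; lra.
  assert (M * (sumR m (fun k => Rabs (f (bl k) - f (al k))) + sumR m (fun k => Rabs (g (bl k) - g (al k)))) <= M * (2 * e)) by (apply Rmult_le_compat_l; lra).
  nra. Qed.

Lemma ac_mult f g a b : a <= b -> abs_cont f a b -> abs_cont g a b -> abs_cont (fun t => f t * g t) a b.
Proof. intros Hab Hf Hg. destruct (ac_bounded f a b Hab Hf) as [M1 HM1]. destruct (ac_bounded g a b Hab Hg) as [M2 HM2].
  assert (0 <= M1) by (specialize (HM1 a ltac:(lra)); assert (0 <= Rabs (f a)) by apply Rabs_pos; lra).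
  assert (0 <= M2) by (specialize (HM2 a ltac:(lra)); assert (0 <= Rabs (g a)) by apply Rabs_pos; lra).
  apply (ac_dom _ f g a b (M1 + M2)); auto. lra.
  intros x y Hx Hy.
  replace (f y * g y - f x * g x) with (f y * (g y - g x) + g x * (f y - f x)) by ring.
  eapply Rle_trans. apply Rabs_triang. rewrite !Rabs_mult.
  specialize (HM1 y ltac:(lra)). specialize (HM2 x ltac:(lra)).
  assert (0 <= Rabs (g y - g x)) by apply Rabs_pos. assert (0 <= Rabs (f y - f x)) by apply Rabs_pos.
  assert (Rabs (f y) * Rabs (g y - g x) <= M1 * Rabs (g y - g x)) by (apply Rmult_le_compat_r; lra).
  assert (Rabs (g x) * Rabs (f y - f x) <= M2 * Rabs (f y - f x)) by (apply Rmult_le_compat_r; lra).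
  nra. Qed.

Lemma ac_C1 g g' a b : a <= b -> (forall t, derivable_pt_lim g t (g' t)) -> (forall t, continuity_pt g' t) -> abs_cont g a b.
Proof. intros Hab Hd Hc.
  destruct (continuity_ab_maj g' a b Hab (fun c _ => Hc c)) as [Mx [HMx _]].
  destruct (continuity_ab_min g' a b Hab (fun c _ => Hc c)) as [mx [Hmx _]].
  set (M := Rabs (g' Mx) + Rabs (g' mx)).
  assert (HM : forall c, a <= c <= b -> Rabs (g' c) <= M).
  { intros c Hc'. specialize (HMx c Hc'). specialize (Hmx c Hc'). unfold M.
    apply Rabs_le. split. destruct (Rabs_le_between (g' mx) (Rabs (g' mx)) (Rle_refl _)). assert (0 <= Rabs (g' Mx)) by apply Rabs_pos. lra.
    assert (g' Mx <= Rabs (g' Mx)) by apply Rle_abs. assert (0 <= Rabs (g' mx)) by apply Rabs_pos. lra. }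
  assert (0 <= M) by (unfold M; assert (0 <= Rabs (g' Mx)) by apply Rabs_pos; assert (0 <= Rabs (g' mx)) by apply Rabs_pos; lra).
  apply (ac_lip g a b M); auto.
  assert (Hlt : forall x y, a <= x <= b -> a <= y <= b -> x < y -> Rabs (g y - g x) <= M * Rabs (y - x)).
  { intros x y Hx Hy Hxy. destruct (MVT_cor2 g g' x y Hxy (fun c _ => Hd c)) as [c [Hc1 Hc2]].
    rewrite Hc1, Rabs_mult. apply Rmult_le_compat_r. apply Rabs_pos. apply HM; lra. }
  intros x y Hx Hy. destruct (Rtotal_order x y) as [Hxy|[Hxy|Hxy]].
  apply Hlt; auto. subst. replace (g y - g y) with 0 by ring. rewrite Rabs_R0. assert (0 <= Rabs (y - y)) by apply Rabs_pos. nra.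
  rewrite Rabs_minus_sym, (Rabs_minus_sym y x). apply Hlt; auto.
Qed.


Lemma divmod_eq a q r : (q < r)%nat -> ((a * r + q) / r = a /\ (a * r + q) mod r = q)%nat.
Proof. intros H. split. symmetry; apply (Nat.div_unique _ _ _ q); lia. symmetry; apply (Nat.mod_unique _ _ a); lia. Qed.

Lemma eye_sum r p h : (p < r)%nat -> sumR r (fun q => eye p q * h q) = h p.
Proof. intros Hp. rewrite <- (sumR_delta r p h Hp). apply sumR_ext. intros q _. unfold eye.
  destruct (Nat.eqb p q); ring. Qed.

Lemma kron_sum m r p (c : nat -> R) h : (p < r)%nat ->
  sumR (m * r) (fun b => c (b / r)%nat * eye p (b mod r)%nat * h b) = sumR m (fun a => c a * h (a * r + p)%nat).
Proof. intros Hp. rewrite sumR_mul_split. apply sumR_ext. intros a _.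
  rewrite <- (eye_sum r p (fun q => c a * h (a * r + q)%nat) Hp).
  apply sumR_ext. intros q Hq. destruct (divmod_eq a q r Hq) as [-> ->]. ring. Qed.

Definition inc := incidence.

Lemma sum_inc n src dst j h : (src j < n)%nat -> (dst j < n)%nat -> src j <> dst j ->
  sumR n (fun i => incidence src dst i j * h i) = h (dst j) - h (src j).
Proof. intros Hs Hd Hne.
  rewrite <- (sumR_delta n (dst j) h Hd), <- (sumR_delta n (src j) h Hs), <- sumR_minus.
  apply sumR_ext. intros i _. unfold incidence.
  destruct (Nat.eqb_spec (dst j) i); destruct (Nat.eqb_spec (src j) i); try lia; ring. Qed.

Section Idx.
Variables (n r ell : nat) (src dst : nat -> nat) (phi : R -> vec) (gamma : R).
Variable p : nat.
Hypothesis Hp : (p < r)%nat.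
Hypothesis Hedges : forall j, (j < ell)%nat -> (src j < n)%nat /\ (dst j < n)%nat /\ src j <> dst j.

Definition Xc (t : R) (v : vec) (i : nat) : R := v (i * r + p)%nat + phi t (i * r + p)%nat.

Lemma BTI_eq u j : (j < ell)%nat ->
  matvec (n * r) (BTI r src dst) u (j * r + p)%nat = u (dst j * r + p)%nat - u (src j * r + p)%nat.
Proof. intros Hj. destruct (Hedges j Hj) as [Hs [Hd Hne]].
  unfold matvec, BTI, kron, transpose; cbv beta. destruct (divmod_eq j p r Hp) as [-> ->].
  rewrite (kron_sum n r p (fun i => incidence src dst i j) u Hp).
  apply (sum_inc n src dst j (fun i => u (i * r + p)%nat)); auto.
Qed.

Lemma est_y_eq t v j : (j < ell)%nat ->
  est_y n r src dst phi t v (j * r + p)%nat = Xc t v (dst j) - Xc t v (src j).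
Proof. intros Hj. destruct (Hedges j Hj) as [Hs [Hd Hne]].
  unfold est_y, matvec, BTI, kron, transpose; cbv beta. destruct (divmod_eq j p r Hp) as [-> ->].
  rewrite (kron_sum n r p (fun i => incidence src dst i j) (fun b => v b + phi t b) Hp). unfold Xc. apply (sum_inc n src dst j (fun i => v (i * r + p)%nat + phi t (i * r + p)%nat)); auto.
Qed.

Lemma est_u_eq t v i : (i < n)%nat ->
  est_u n r ell src dst phi t v (i * r + p)%nat =
  - sumR ell (fun j => incidence src dst i j * (v (n * r + (j * r + p))%nat * sgnR (est_y n r src dst phi t v (j * r + p)%nat))).
Proof. intros Hi. unfold est_u, matvec, BI, kron; cbv beta. destruct (divmod_eq i p r Hp) as [-> ->].
  f_equal. apply (kron_sum ell r p (fun j => incidence src dst i j) (fun b => v (n * r + b)%nat * sgnR (est_y n r src dst phi t v b)) Hp). Qed.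

Lemma field_z t v i : (i < n)%nat ->
  est_field n r ell src dst gamma phi t v (i * r + p)%nat = - gamma * v (i * r + p)%nat + est_u n r ell src dst phi t v (i * r + p)%nat.
Proof. intros Hi. unfold est_field. assert (Nat.ltb (i * r + p) (n * r) = true) by (apply Nat.ltb_lt; nia). rewrite H; auto. Qed.

Lemma field_k t v j : (j < ell)%nat ->
  est_field n r ell src dst gamma phi t v (n * r + (j * r + p))%nat = Rabs (est_y n r src dst phi t v (j * r + p)%nat).
Proof. intros Hj. unfold est_field. assert (Nat.ltb (n * r + (j * r + p)) (n * r) = false) by (apply Nat.ltb_ge; nia).
  assert (Nat.ltb (n * r + (j * r + p)) (n * r + ell * r) = true) by (apply Nat.ltb_lt; nia). rewrite H, H0.
  f_equal. f_equal. lia. Qed.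

Lemma xtilde_eq w t i : (i < n)%nat ->
  xtilde n r phi w t (i * r + p)%nat = Xc t (w t) i - / INR n * sumR n (fun i' => phi t (i' * r + p)%nat).
Proof. intros Hi. unfold xtilde, Xc. f_equal. unfold matvec, kron, ones; cbv beta.
  destruct (divmod_eq i p r Hp) as [_ ->].
  rewrite (sumR_ext r _ (fun b => eye p b * phibar n r phi t b)).
  rewrite eye_sum by auto. unfold phibar, matvec, kron, ones. f_equal.
  rewrite (Nat.mod_small p r Hp).
  rewrite (kron_sum n r p (fun _ => 1) (fun b => phi t b) Hp). apply sumR_ext; intros; ring.
  intros b Hb. rewrite (Nat.mod_small b r Hb). ring. Qed.
End Idx.


Lemma sumR_const m c : sumR m (fun _ => c) = INR m * c.
Proof. induction m; simpl sumR; [simpl; ring|]. rewrite IHm, S_INR; ring. Qed.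

Lemma reach_bound ell src dst i k : reach ell src dst i k -> exists m : nat, forall f H,
  (forall e, (e < ell)%nat -> Rabs (f (dst e) - f (src e)) <= H) -> 0 <= H -> Rabs (f k - f i) <= INR m * H.
Proof. induction 1. exists 0%nat. intros. replace (f i - f i) with 0 by ring. rewrite Rabs_R0; simpl; lra.
  destruct IHreach as [m Hm]. exists (S m). intros f Hh He Hz. specialize (Hm f Hh He Hz).
  specialize (He e H0). subst. rewrite S_INR.
  assert (Rabs (f (dst e) - f i) <= Rabs (f (dst e) - f (src e)) + Rabs (f (src e) - f i)) by
    (eapply Rle_trans; [|apply Rabs_triang]; right; f_equal; ring). lra. Qed.

Lemma fin_max (Q : nat -> R -> Prop) m : (forall i M M', M <= M' -> Q i M -> Q i M') ->
  (forall i, (i < m)%nat -> exists M, Q i M) -> exists M, 0 <= M /\ forall i, (i < m)%nat -> Q i M.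
Proof. intros Hmon. induction m; intros H. exists 0; split; [lra|]; intros; lia.
  destruct IHm as [M [HM0 HM]]. intros; apply H; lia. destruct (H m ltac:(lia)) as [M1 HM1].
  exists (Rmax M M1). split. eapply Rle_trans; [|apply Rmax_l]; auto.
  intros i Hi. destruct (Nat.eq_dec i m). subst. eapply Hmon; [apply Rmax_r|auto].
  eapply Hmon; [apply Rmax_l|apply HM; lia]. Qed.

Lemma all_pairs n ell src dst : (forall i k, (i < n)%nat -> (k < n)%nat -> reach ell src dst i k) ->
  exists M, 0 <= M /\ forall i k, (i < n)%nat -> (k < n)%nat -> forall f H,
  (forall e, (e < ell)%nat -> Rabs (f (dst e) - f (src e)) <= H) -> 0 <= H -> Rabs (f k - f i) <= M * H.
Proof. intros Hr.
  destruct (fin_max (fun i M => forall k, (k < n)%nat -> forall f H,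
    (forall e, (e < ell)%nat -> Rabs (f (dst e) - f (src e)) <= H) -> 0 <= H -> Rabs (f k - f i) <= M * H) n) as [M [HM0 HM]].
  - intros i M M' HMM HQ k Hk f H He H0. specialize (HQ k Hk f H He H0). assert (M * H <= M' * H) by (apply Rmult_le_compat_r; lra). lra.
  - intros i Hi. destruct (fin_max (fun k M => forall f H,
      (forall e, (e < ell)%nat -> Rabs (f (dst e) - f (src e)) <= H) -> 0 <= H -> Rabs (f k - f i) <= M * H) n) as [M [HM0 HM]].
    + intros k M M' HMM HQ f H He H0. specialize (HQ f H He H0). assert (M * H <= M' * H) by (apply Rmult_le_compat_r; lra). lra.
    + intros k Hk. destruct (reach_bound ell src dst i k (Hr i k Hi Hk)) as [m Hm]. exists (INR m). auto.
    + exists M. intros k Hk. apply HM; auto.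
  - exists M; split; auto. Qed.

Lemma avg_dev n X i B : (n > 0)%nat -> (forall k, (k < n)%nat -> Rabs (X i - X k) <= B) ->
  Rabs (X i - / INR n * sumR n X) <= B.
Proof. intros Hn HB. assert (Hn' : INR n > 0) by (apply lt_0_INR; lia).
  replace (X i - / INR n * sumR n X) with (/ INR n * sumR n (fun k => X i - X k)).
  rewrite Rabs_mult, Rabs_inv, (Rabs_right (INR n)) by lra.
  apply Rle_trans with (/ INR n * sumR n (fun _ => B)).
  apply Rmult_le_compat_l. left; apply Rinv_0_lt_compat; lra.
  eapply Rle_trans; [apply sumR_abs|]. apply sumR_le; auto.
  rewrite sumR_const. right; field; lra.
  rewrite sumR_minus, sumR_const. field; lra. Qed.

Lemma Qh_bound n ell src dst : (n > 0)%nat -> (forall i k, (i < n)%nat -> (k < n)%nat -> reach ell src dst i k) ->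
  exists C, 0 <= C /\ forall (X h : nat -> R) H, 0 <= H -> (forall e, (e < ell)%nat -> Rabs (h (dst e) - h (src e)) <= H) ->
  Rabs (sumR n (fun i => (X i - / INR n * sumR n X) * h i)) <= C * H * sumR ell (fun j => Rabs (X (dst j) - X (src j))).
Proof. intros Hn Hr. destruct (all_pairs n ell src dst Hr) as [M [HM0 HM]].
  exists (INR n * M * M). split. assert (0 <= INR n) by apply pos_INR. apply Rmult_le_pos; [apply Rmult_le_pos|]; auto.
  intros X h H H0 Hh. set (S := sumR ell (fun j => Rabs (X (dst j) - X (src j)))).
  assert (HS0 : 0 <= S) by (apply sumR_nonneg; intros; apply Rabs_pos).
  assert (HXe : forall e, (e < ell)%nat -> Rabs (X (dst e) - X (src e)) <= S).
  { intros e He. apply (sumR_ge_term ell (fun j => Rabs (X (dst j) - X (src j)))); auto. intros; apply Rabs_pos. }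
  assert (Hn' : INR n > 0) by (apply lt_0_INR; lia).
  set (Xb := / INR n * sumR n X).
  assert (Hz : sumR n (fun i => (X i - Xb) * h 0%nat) = 0).
  { rewrite <- sumR_mul_distr_r, sumR_minus, sumR_const. unfold Xb. field_simplify; [|lra]. lra. }
  replace (sumR n (fun i => (X i - Xb) * h i)) with (sumR n (fun i => (X i - Xb) * (h i - h 0%nat))).
  2: { replace (sumR n (fun i => (X i - Xb) * h i)) with (sumR n (fun i => (X i - Xb) * h i) - sumR n (fun i => (X i - Xb) * h 0%nat)) by lra.
       rewrite <- sumR_minus. apply sumR_ext; intros; ring. }
  eapply Rle_trans; [apply sumR_abs|].
  apply Rle_trans with (sumR n (fun _ => (M * S) * (M * H))).
  - apply sumR_le. intros i Hi. rewrite Rabs_mult. apply Rmult_le_compat; [apply Rabs_pos|apply Rabs_pos| |].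
    + apply avg_dev; auto; intros k Hk; rewrite Rabs_minus_sym; apply HM; auto.
    + apply (HM 0%nat i); auto; lia.
  - rewrite sumR_const. right; ring.
Qed.


Lemma dmul f g t a b : derivable_pt_lim f t a -> derivable_pt_lim g t b ->
  derivable_pt_lim (fun s => f s * g s) t (a * g t + f t * b).
Proof. intros; apply (derivable_pt_lim_mult f g t a b); auto. Qed.
Lemma dplus f g t a b : derivable_pt_lim f t a -> derivable_pt_lim g t b ->
  derivable_pt_lim (fun s => f s + g s) t (a + b).
Proof. intros; apply (derivable_pt_lim_plus f g t a b); auto. Qed.
Lemma dminus f g t a b : derivable_pt_lim f t a -> derivable_pt_lim g t b ->
  derivable_pt_lim (fun s => f s - g s) t (a - b).
Proof. intros; apply (derivable_pt_lim_minus f g t a b); auto. Qed.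
Lemma dconst c t : derivable_pt_lim (fun _ => c) t 0.
Proof. apply derivable_pt_lim_const. Qed.
Lemma dscal c f t a : derivable_pt_lim f t a -> derivable_pt_lim (fun s => c * f s) t (c * a).
Proof. intros H. replace (c * a) with (0 * f t + c * a) by ring. apply (dmul (fun _ => c) f); auto. apply dconst. Qed.
Lemma dsum m (f : nat -> R -> R) d t : (forall i, (i < m)%nat -> derivable_pt_lim (f i) t (d i)) ->
  derivable_pt_lim (fun s => sumR m (fun i => f i s)) t (sumR m d).
Proof. induction m; intros H; simpl. apply dconst. apply (dplus (fun s => sumR m (fun i => f i s)) (f m)).
  apply IHm; intros; apply H; lia. apply H; lia. Qed.
Lemma dexp g t : derivable_pt_lim (fun s => exp (g * s)) t (g * exp (g * t)).
Proof. replace (g * exp (g * t)) with (exp (g * t) * (g * 1)) by ring.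
  apply (derivable_pt_lim_comp (fun s => g * s) exp). apply dscal. apply derivable_pt_lim_id. apply derivable_pt_lim_exp. Qed.
Lemma cexp g t : continuity_pt (fun s => g * exp (g * s)) t.
Proof. apply (continuity_pt_mult (fun _ => g) (fun s => exp (g * s))). apply continuity_pt_const; intros x y; auto.
  apply (continuity_pt_comp (fun s => g * s) exp). apply (continuity_pt_mult (fun _ => g) (fun s => s)).
  apply continuity_pt_const; intros x y; auto. apply (derivable_continuous_pt (fun s => s)). apply derivable_pt_id. apply (derivable_continuous_pt exp). apply derivable_exp. Qed.

Definition lf m (c : nat -> R) (g : nat -> nat) (d : vec) : R := sumR m (fun i => c i * d (g i)).

Lemma lf_lin m c g a b lam : lf m c g (fun k => lam * a k + (1 - lam) * b k) = lam * lf m c g a + (1 - lam) * lf m c g b.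
Proof. unfold lf. rewrite <- !sumR_scal, <- sumR_plus. apply sumR_ext; intros; ring. Qed.

Lemma lf_lip D m c g a b : (forall i, (i < m)%nat -> (g i < D)%nat) ->
  Rabs (lf m c g a - lf m c g b) <= sumR m (fun i => Rabs (c i)) * vdist D a b.
Proof. intros Hg. unfold lf. rewrite <- sumR_minus. eapply Rle_trans; [apply sumR_abs|].
  rewrite sumR_mul_distr_r. apply sumR_le. intros i Hi.
  replace (c i * a (g i) - c i * b (g i)) with (c i * (a (g i) - b (g i))) by ring.
  rewrite Rabs_mult. apply Rmult_le_compat_l. apply Rabs_pos. apply vdist_coord; auto. Qed.

Lemma fil_bound D f w d m1 c1 g1 m2 c2 g2 A B δ0 :
  (D > 0)%nat -> filippov_set D f w d -> δ0 > 0 -> 0 <= B ->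
  (forall i, (i < m1)%nat -> (g1 i < D)%nat) -> (forall i, (i < m2)%nat -> (g2 i < D)%nat) ->
  (forall δ, 0 < δ <= δ0 -> forall v, vdist D v w < δ -> lf m1 c1 g1 (f v) + lf m2 c2 g2 (f v) <= A + B * δ) ->
  lf m1 c1 g1 d + lf m2 c2 g2 d <= A.
Proof.
  intros HD Hf Hd0 HB Hg1 Hg2 Hv.
  assert (Hall : forall δ, 0 < δ <= δ0 -> lf m1 c1 g1 d + lf m2 c2 g2 d <= A + B * δ).
  { intros δ Hδ. apply (fil_half D f w d (fun x => lf m1 c1 g1 x + lf m2 c2 g2 x)
      (sumR m1 (fun i => Rabs (c1 i)) + sumR m2 (fun i => Rabs (c2 i))) (A + B * δ) δ); [auto|auto|lra| | | | ].
    - assert (0 <= sumR m1 (fun i => Rabs (c1 i))) by (apply sumR_nonneg; intros; apply Rabs_pos).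
      assert (0 <= sumR m2 (fun i => Rabs (c2 i))) by (apply sumR_nonneg; intros; apply Rabs_pos). lra.
    - intros a b lam. rewrite !lf_lin. ring.
    - intros a b. assert (H1 := lf_lip D m1 c1 g1 a b Hg1). assert (H2 := lf_lip D m2 c2 g2 a b Hg2).
      eapply Rle_trans; [|right; symmetry; apply Rmult_plus_distr_r].
      eapply Rle_trans; [|apply Rplus_le_compat; [apply H1|apply H2]].
      eapply Rle_trans; [|apply Rabs_triang]. right; f_equal; ring.
    - intros v Hvd. apply (Hv δ Hδ v Hvd). }
  apply Rnot_gt_le. intros Hgt.
  set (e := lf m1 c1 g1 d + lf m2 c2 g2 d - A).
  set (δ := Rmin δ0 (e / (2 * (B + 1)))).
  assert (He2 : e / (2 * (B + 1)) > 0) by (apply Rdiv_lt_0_compat; unfold e; lra).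
  assert (Hδ : 0 < δ <= δ0) by (split; [apply Rmin_glb_lt; lra| apply Rmin_l]).
  specialize (Hall δ Hδ).
  assert (δ <= e / (2 * (B + 1))) by apply Rmin_r.
  assert (e / (2 * (B + 1)) * (2 * (B + 1)) = e) by (field; lra).
  assert (B * δ <= B * (e / (2 * (B + 1)))) by (apply Rmult_le_compat_l; lra).
  unfold e in *. nra.
Qed.

Lemma fin_min (P : nat -> R -> Prop) m :
  (forall j, (j < m)%nat -> exists δ, δ > 0 /\ forall δ', 0 < δ' <= δ -> P j δ') ->
  exists δ, δ > 0 /\ forall j, (j < m)%nat -> forall δ', 0 < δ' <= δ -> P j δ'.
Proof. induction m; intros H. exists 1; split; [lra|]; intros; lia.
  destruct IHm as [d1 [Hd1 H1]]. intros; apply H; lia.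
  destruct (H m ltac:(lia)) as [d2 [Hd2 H2]].
  exists (Rmin d1 d2). split. apply Rmin_glb_lt; auto.
  intros j Hj δ' Hδ'. assert (Rmin d1 d2 <= d1) by apply Rmin_l. assert (Rmin d1 d2 <= d2) by apply Rmin_r.
  destruct (Nat.eq_dec j m). subst. apply H2; lra. apply H1; [lia|lra]. Qed.

Lemma term_bound yw yv kw kv c δ : 0 <= δ -> Rabs (kv - kw) <= δ -> Rabs (yv - yw) <= 2 * δ ->
  (yw = 0 \/ 2 * δ < Rabs yw) ->
  - (kv * sgnR yv * yw) + (kw - c) * Rabs yv <= - c * Rabs yw + δ * (Rabs yw + 2 * Rabs kw + 2 * Rabs c).
Proof.
  intros H0 Hk Hy Hc. apply Rabs_le_between in Hk. apply Rabs_le_between in Hy.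
  destruct Hc as [->|Hc].
  - rewrite Rabs_R0. replace (yv - 0) with yv in Hy by ring.
    replace (- (kv * sgnR yv * 0)) with 0 by ring.
    assert (Rabs yv <= 2 * δ) by (apply Rabs_le; lra).
    assert (Hkw := Rabs_le_between kw (Rabs kw) (Rle_refl _)).
    assert (Hcc := Rabs_le_between c (Rabs c) (Rle_refl _)).
    assert (0 <= Rabs yv) by apply Rabs_pos.
    assert ((kw - c) * Rabs yv <= (Rabs kw + Rabs c) * Rabs yv) by (apply Rmult_le_compat_r; lra).
    assert ((Rabs kw + Rabs c) * Rabs yv <= (Rabs kw + Rabs c) * (2 * δ)) by (apply Rmult_le_compat_l; lra).
    nra.
  - assert (Hkw := Rabs_le_between kw (Rabs kw) (Rle_refl _)).
    assert (Hcc := Rabs_le_between c (Rabs c) (Rle_refl _)).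
    unfold sgnR. destruct (Rlt_dec 0 yv); [|destruct (Rlt_dec yv 0)].
    + assert (yw > 0). { unfold Rabs in Hc; destruct (Rcase_abs yw); lra. }
      rewrite (Rabs_right yv), (Rabs_right yw) in * by lra.
      assert (kw * (yv - yw) <= Rabs kw * (2 * δ)).
      { destruct (Rle_dec 0 kw). assert (kw * (yv - yw) <= kw * (2 * δ)) by (apply Rmult_le_compat_l; lra). 
        rewrite Rabs_right by lra. lra. rewrite Rabs_left by lra. nra. }
      assert (- c * (yv - yw) <= Rabs c * (2 * δ)).
      { destruct (Rle_dec 0 c). rewrite Rabs_right by lra. nra. rewrite Rabs_left by lra. nra. }
      assert (-(kv - kw) * yw <= δ * yw) by nra.
      nra.
    + assert (yw < 0). { unfold Rabs in Hc; destruct (Rcase_abs yw); lra. }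
      rewrite (Rabs_left yv), (Rabs_left yw) in * by lra.
      assert (kw * (yw - yv) <= Rabs kw * (2 * δ)).
      { destruct (Rle_dec 0 kw). rewrite Rabs_right by lra. nra. rewrite Rabs_left by lra. nra. }
      assert (- c * (yw - yv) <= Rabs c * (2 * δ)).
      { destruct (Rle_dec 0 c). rewrite Rabs_right by lra. nra. rewrite Rabs_left by lra. nra. }
      assert ((kv - kw) * yw <= δ * (- yw)) by nra.
      nra.
    + exfalso. assert (yv = 0) by lra. subst. unfold Rabs in Hc; destruct (Rcase_abs yw); lra.
Qed.

Lemma null1_of_nullD Z : nullD 1 (fun v => Z (v O)) -> null1 Z.
Proof. intros H eps He. destruct (H eps He) as [lo [hi [H1 [H2 H3]]]].
  exists (fun k => lo k 0%nat), (fun k => hi k 0%nat). split; [intros; apply H1|split].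
  - intros t Zt. destruct (H2 (fun _ => t) Zt) as [k Hk]. exists k. apply Hk; lia.
  - intros K. specialize (H3 K). simpl in H3. rewrite (sumR_ext K _ (fun k => hi k 0%nat - lo k 0%nat)) in H3; auto.
    intros; ring. Qed.


Section Main.
Variables (n r ell : nat) (src dst : nat -> nat) (phi phi' : R -> nat -> R) (gamma t0 : R) (w : R -> nat -> R).
Hypothesis Hedges : forall j, (j < ell)%nat -> (src j < n)%nat /\ (dst j < n)%nat /\ src j <> dst j.
Hypothesis Hreach : forall i k, (i < n)%nat -> (k < n)%nat -> reach ell src dst i k.
Hypothesis Hphid : forall k t, (k < n * r)%nat -> derivable_pt_lim (fun s => phi s k) t (phi' t k).
Hypothesis Hphic : forall k t, (k < n * r)%nat -> continuity_pt (fun s => phi' s k) t.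
Variables vphi dvphi : R.
Hypothesis HA2 : forall t, 0 <= t -> forall a, (a < ell * r)%nat ->
      Rabs (matvec (n * r) (BTI r src dst) (phi t) a) <= vphi /\
      Rabs (matvec (n * r) (BTI r src dst) (phi' t) a) <= dvphi.
Hypothesis Hg : gamma > 0.
Hypothesis Ht0 : 0 <= t0.
Hypothesis Hac : forall T, T > t0 -> forall k, (k < n * r + ell * r)%nat -> abs_cont (fun s => w s k) t0 T.
Variable Z : R -> Prop.
Hypothesis HZ : null1 Z.
Hypothesis Hder : forall t, t > t0 -> ~ Z t -> exists d : vec,
      (forall k, (k < n * r + ell * r)%nat -> derivable_pt_lim (fun s => w s k) t (d k)) /\
      filippov_set (n * r + ell * r) (est_field n r ell src dst gamma phi t) (w t) d.
Variable p : nat.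
Hypothesis Hp : (p < r)%nat.
Hypothesis Hn : (n > 0)%nat.

Let D := (n * r + ell * r)%nat.
Lemma HD : (D > 0)%nat. Proof. unfold D. nia. Qed.

Lemma sum_u0 t v : sumR n (fun i => est_u n r ell src dst phi t v (i * r + p)%nat) = 0.
Proof.
  rewrite (sumR_ext n _ (fun i => - sumR ell (fun j => incidence src dst i j *
     (v (n * r + (j * r + p))%nat * sgnR (est_y n r src dst phi t v (j * r + p)%nat))))).
  2: { intros i Hi. apply est_u_eq; auto. }
  rewrite (sumR_ext n _ (fun i => -1 * sumR ell (fun j => incidence src dst i j *
     (v (n * r + (j * r + p))%nat * sgnR (est_y n r src dst phi t v (j * r + p)%nat))))) by (intros; ring).
  rewrite sumR_scal, sumR_swap.
  rewrite (sumR_ext ell _ (fun _ => 0)). rewrite sumR_zero; ring.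
  intros j Hj. destruct (Hedges j Hj) as [H1 [H2 H3]].
  rewrite (sum_inc n src dst j (fun _ => v (n * r + (j * r + p))%nat * sgnR (est_y n r src dst phi t v (j * r + p)%nat))); auto. ring.
Qed.

Lemma idx_z i : (i < n)%nat -> (i * r + p < D)%nat.
Proof. unfold D; intros; nia. Qed.
Lemma idx_k j : (j < ell)%nat -> (n * r + (j * r + p) < D)%nat.
Proof. unfold D; intros; nia. Qed.

Lemma avg_deriv t d : filippov_set D (est_field n r ell src dst gamma phi t) (w t) d ->
  sumR n (fun i => d (i * r + p)%nat) = - gamma * sumR n (fun i => w t (i * r + p)%nat).
Proof.
  intros Hf.
  assert (Hfv : forall v, sumR n (fun i => est_field n r ell src dst gamma phi t v (i * r + p)%nat) = - gamma * sumR n (fun i => v (i * r + p)%nat)).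
  { intros v. rewrite (sumR_ext n _ (fun i => - gamma * v (i * r + p)%nat + est_u n r ell src dst phi t v (i * r + p)%nat)).
    rewrite sumR_plus, sum_u0, sumR_scal. ring. intros; apply field_z; auto. }
  assert (Hclose : forall δ v, vdist D v (w t) < δ -> Rabs (sumR n (fun i => v (i * r + p)%nat) - sumR n (fun i => w t (i * r + p)%nat)) <= INR n * δ).
  { intros δ v Hv. rewrite <- sumR_minus. eapply Rle_trans; [apply sumR_abs|]. rewrite <- sumR_const.
    apply sumR_le. intros i Hi. assert (H := vdist_coord D v (w t) _ (idx_z i Hi)). lra. }
  assert (Hn' : 0 <= INR n) by apply pos_INR.
  apply Rle_antisym.
  - assert (H := fil_bound D _ (w t) d n (fun _ => 1) (fun i => (i * r + p)%nat) 0 (fun _ => 0) (fun i => i)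
      (- gamma * sumR n (fun i => w t (i * r + p)%nat)) (gamma * INR n) 1 HD Hf ltac:(lra) ltac:(apply Rmult_le_pos; lra)
      idx_z ltac:(intros; lia)).
    unfold lf in H. simpl in H. rewrite Rplus_0_r in H.
    rewrite (sumR_ext n (fun i => 1 * d (i * r + p)%nat) (fun i => d (i * r + p)%nat)) in H by (intros; ring). apply H.
    intros δ Hδ v Hv. rewrite Rplus_0_r. rewrite (sumR_ext n (fun i => 1 * est_field n r ell src dst gamma phi t v (i * r + p)%nat) (fun i => est_field n r ell src dst gamma phi t v (i * r + p)%nat)) by (intros; ring).
    rewrite Hfv. specialize (Hclose δ v Hv). apply Rabs_le_between in Hclose. nra.
  - assert (H := fil_bound D _ (w t) d n (fun _ => -1) (fun i => (i * r + p)%nat) 0 (fun _ => 0) (fun i => i)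
      (gamma * sumR n (fun i => w t (i * r + p)%nat)) (gamma * INR n) 1 HD Hf ltac:(lra) ltac:(apply Rmult_le_pos; lra)
      idx_z ltac:(intros; lia)).
    unfold lf in H. simpl in H. rewrite Rplus_0_r in H.
     rewrite sumR_scal in H.
    assert (-1 * sumR n (fun i => d (i * r + p)%nat) <= gamma * sumR n (fun i => w t (i * r + p)%nat)).
    apply H.
    intros δ Hδ v Hv. rewrite Rplus_0_r.     rewrite sumR_scal, Hfv. specialize (Hclose δ v Hv). apply Rabs_le_between in Hclose. nra.
    lra.
Qed.

Definition Zs s := sumR n (fun i => w s (i * r + p)%nat).

Lemma ac_w a b k : t0 < a -> a <= b -> (k < D)%nat -> abs_cont (fun s => w s k) a b.
Proof. intros Ha Hab Hk. apply (ac_restrict _ t0 b); [apply Hac; auto; lra|lra|lra]. Qed.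

Lemma ac_Zs a b : t0 < a -> a <= b -> abs_cont Zs a b.
Proof. intros Ha Hab. unfold Zs. apply (ac_sum n (fun i s => w s (i * r + p)%nat)). intros i Hi. apply ac_w; auto. apply idx_z; auto. Qed.

Lemma ac_exp a b : a <= b -> abs_cont (fun s => exp (gamma * s)) a b.
Proof. intros Hab. apply (ac_C1 _ (fun s => gamma * exp (gamma * s))); auto. intros; apply dexp. intros; apply cexp. Qed.

Lemma G_const a b : t0 < a -> a <= b -> exp (gamma * b) * Zs b = exp (gamma * a) * Zs a.
Proof.
  intros Ha Hab.
  assert (HACG : abs_cont (fun s => exp (gamma * s) * Zs s) a b) by (apply ac_mult; auto; [apply ac_exp|apply ac_Zs]; auto).
  assert (Hd : forall t, a <= t <= b -> ~ Z t -> derivable_pt_lim (fun s => exp (gamma * s) * Zs s) t 0).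
  { intros t Ht nZ. destruct (Hder t ltac:(lra) nZ) as [d [Hdd Hf]].
    assert (H := avg_deriv t d Hf).
    replace 0 with (gamma * exp (gamma * t) * Zs t + exp (gamma * t) * sumR n (fun i => d (i * r + p)%nat)).
    apply (dmul (fun s => exp (gamma * s)) Zs). apply dexp. unfold Zs. apply (dsum n (fun i s => w s (i * r + p)%nat) (fun i => d (i * r + p)%nat)).
    intros i Hi. apply Hdd. apply idx_z; auto.
    rewrite H. unfold Zs. ring. }
  apply Rle_antisym.
  - apply (mono (fun s => exp (gamma * s) * Zs s) a b Z); auto. intros t Ht nZ. exists 0. split; [apply Hd|]; auto; lra.
  - assert (H := mono (fun s => -1 * (exp (gamma * s) * Zs s)) a b Z Hab HZ (ac_scal _ _ a b HACG)).
    assert (-1 * (exp (gamma * b) * Zs b) <= -1 * (exp (gamma * a) * Zs a)). apply H.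
    intros t Ht nZ. exists (-1 * 0). split. apply dscal. apply Hd; auto. lra. lra.
Qed.

Lemma Zs_lim : forall eps, eps > 0 -> exists T, forall t, t >= T -> Rabs (Zs t) < eps.
Proof.
  intros eps He. set (t1 := t0 + 1). set (G := exp (gamma * t1) * Zs t1).
  exists (Rmax t1 (Rabs G / (gamma * eps))). intros t Ht.
  pose proof (Rmax_l t1 (Rabs G / (gamma * eps))). pose proof (Rmax_r t1 (Rabs G / (gamma * eps))).
  assert (Ht1 : t1 <= t) by lra.
  assert (Ht2 : Rabs G / (gamma * eps) <= t) by lra.
  assert (HG := G_const t1 t ltac:(unfold t1; lra) Ht1). fold G in HG.
  assert (He1 : 1 + gamma * t < exp (gamma * t)) by (apply exp_ineq1; unfold t1 in *; nra).
  assert (Hep : 0 < exp (gamma * t)) by apply exp_pos.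
  assert (Hz : Zs t = G / exp (gamma * t)) by (rewrite <- HG; field; lra).
  rewrite Hz. unfold Rdiv. rewrite Rabs_mult, Rabs_inv, (Rabs_right (exp _)) by lra.
  assert (Habs : 0 <= Rabs G) by apply Rabs_pos.
  assert (Rabs G <= gamma * eps * t).
  { assert (Rabs G / (gamma * eps) * (gamma * eps) = Rabs G) by (field; lra).
    assert (0 < gamma * eps) by nra. nra. }
  apply (Rmult_lt_reg_r (exp (gamma * t))); auto. rewrite Rmult_assoc, Rinv_l by lra.
  assert (0 <= t) by (unfold t1 in *; lra). nra.
Qed.

Variable C1 : R.
Hypothesis HC1 : forall (X h : nat -> R) H, 0 <= H -> (forall e, (e < ell)%nat -> Rabs (h (dst e) - h (src e)) <= H) ->
  Rabs (sumR n (fun i => (X i - / INR n * sumR n X) * h i)) <= C1 * H * sumR ell (fun j => Rabs (X (dst j) - X (src j))).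
Hypothesis HC10 : 0 <= C1.
Hypothesis Hv0 : 0 <= vphi.
Hypothesis Hdv0 : 0 <= dvphi.
Let c := C1 * (gamma * vphi + dvphi).

Definition Xs s i := w s (i * r + p)%nat + phi s (i * r + p)%nat.
Definition Xb s := / INR n * sumR n (Xs s).
Definition Q s i := Xs s i - Xb s.
Definition kap s j := w s (n * r + (j * r + p))%nat.
Definition kap_v (v : vec) j := v (n * r + (j * r + p))%nat.
Definition Yv s v j := Xc r phi p s v (dst j) - Xc r phi p s v (src j).

Lemma sumQ0 s : sumR n (Q s) = 0.
Proof. unfold Q, Xb. rewrite sumR_minus, sumR_const. assert (INR n > 0) by (apply lt_0_INR; lia). field; lra. Qed.

Lemma sum_incQ (q a : nat -> R) : sumR n (fun i => q i * sumR ell (fun j => incidence src dst i j * a j)) =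
  sumR ell (fun j => a j * (q (dst j) - q (src j))).
Proof.
  rewrite (sumR_ext n _ (fun i => sumR ell (fun j => q i * (incidence src dst i j * a j)))).
  2: { intros; rewrite <- sumR_scal; auto. }
  rewrite sumR_swap. apply sumR_ext. intros j Hj. destruct (Hedges j Hj) as [H1 [H2 H3]].
  rewrite (sumR_ext n _ (fun i => incidence src dst i j * (q i * a j))) by (intros; ring).
  rewrite (sum_inc n src dst j (fun i => q i * a j)); auto. ring.
Qed.

Lemma V_fil t d : t > t0 -> filippov_set D (est_field n r ell src dst gamma phi t) (w t) d ->
  lf n (Q t) (fun i => (i * r + p)%nat) d + lf ell (fun j => kap t j - c) (fun j => (n * r + (j * r + p))%nat) d
  <= - gamma * sumR n (fun i => Q t i * w t (i * r + p)%nat) - c * sumR ell (fun j => Rabs (Yv t (w t) j)).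
Proof.
  intros Ht Hf.
  destruct (fin_min (fun j δ => Yv t (w t) j = 0 \/ 2 * δ < Rabs (Yv t (w t) j)) ell) as [δ0 [Hδ0 Hmin]].
  { intros j Hj. destruct (Req_dec (Yv t (w t) j) 0) as [H0|H0].
    - exists 1. split; [lra|]. intros; left; auto.
    - exists (Rabs (Yv t (w t) j) / 4). assert (Rabs (Yv t (w t) j) > 0) by (apply Rabs_pos_lt; auto).
      split; [lra|]. intros; right; lra. }
  set (B := gamma * sumR n (fun i => Rabs (Q t i)) + sumR ell (fun j => Rabs (Yv t (w t) j) + 2 * Rabs (kap t j) + 2 * Rabs c)).
  apply (fil_bound D _ (w t) d _ _ _ _ _ _ _ B δ0 HD Hf Hδ0).
  { unfold B. assert (0 <= sumR n (fun i => Rabs (Q t i))) by (apply sumR_nonneg; intros; apply Rabs_pos).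
    assert (0 <= sumR ell (fun j => Rabs (Yv t (w t) j) + 2 * Rabs (kap t j) + 2 * Rabs c)).
    { apply sumR_nonneg; intros. assert (0 <= Rabs (Yv t (w t) i)) by apply Rabs_pos.
      assert (0 <= Rabs (kap t i)) by apply Rabs_pos. assert (0 <= Rabs c) by apply Rabs_pos. lra. }
    nra. }
  apply idx_z. apply idx_k.
  intros δ Hδ v Hv. unfold lf.
  rewrite (sumR_ext n _ (fun i => Q t i * (- gamma * v (i * r + p)%nat) + Q t i *
     - sumR ell (fun j => incidence src dst i j * (v (n * r + (j * r + p))%nat * sgnR (est_y n r src dst phi t v (j * r + p)%nat))))).
  2: { intros i Hi. rewrite field_z, est_u_eq by auto. ring. }
  rewrite sumR_plus.
  rewrite (sumR_ext n (fun i => Q t i * - sumR ell _) (fun i => -1 * (Q t i * sumR ell (fun j => incidence src dst i j * (v (n * r + (j * r + p))%nat * sgnR (est_y n r src dst phi t v (j * r + p)%nat)))))) by (intros; ring).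
  rewrite sumR_scal, sum_incQ.
  rewrite (sumR_ext ell (fun j => (kap t j - c) * est_field n r ell src dst gamma phi t v (n * r + (j * r + p))%nat)
     (fun j => (kap t j - c) * Rabs (Yv t v j))).
  2: { intros j Hj. rewrite field_k by auto. rewrite (est_y_eq n r ell src dst phi p Hp Hedges t v j Hj). auto. }
  rewrite (sumR_ext ell (fun j => v (n * r + (j * r + p))%nat * sgnR (est_y n r src dst phi t v (j * r + p)%nat) * (Q t (dst j) - Q t (src j)))
     (fun j => kap_v v j * sgnR (Yv t v j) * Yv t (w t) j)).
  2: { intros j Hj. rewrite (est_y_eq n r ell src dst phi p Hp Hedges t v j Hj). unfold kap_v, Yv, Q, Xs, Xc. f_equal. ring. }
  assert (Hcoord : forall k, (k < D)%nat -> Rabs (v k - w t k) <= δ).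
  { intros k Hk. assert (H := vdist_coord D v (w t) k Hk). lra. }
  assert (Hz : sumR n (fun i => Q t i * (- gamma * v (i * r + p)%nat)) <=
     - gamma * sumR n (fun i => Q t i * w t (i * r + p)%nat) + gamma * sumR n (fun i => Rabs (Q t i)) * δ).
  { apply Rle_trans with (sumR n (fun i => -gamma * (Q t i * w t (i * r + p)%nat) + (gamma * δ) * Rabs (Q t i))).
    2: { rewrite sumR_plus, !sumR_scal. right; ring. }
    apply sumR_le. intros i Hi.
    specialize (Hcoord _ (idx_z i Hi)).
    assert (Rabs (Q t i * (v (i * r + p)%nat - w t (i * r + p)%nat)) <= Rabs (Q t i) * δ) by
      (rewrite Rabs_mult; apply Rmult_le_compat_l; [apply Rabs_pos|auto]).
    apply Rabs_le_between in H. nra. }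
  assert (Hj : -1 * sumR ell (fun j => kap_v v j * sgnR (Yv t v j) * Yv t (w t) j) +
     sumR ell (fun j => (kap t j - c) * Rabs (Yv t v j)) <=
     - c * sumR ell (fun j => Rabs (Yv t (w t) j)) + δ * sumR ell (fun j => Rabs (Yv t (w t) j) + 2 * Rabs (kap t j) + 2 * Rabs c)).
  { rewrite <- !sumR_scal, <- !sumR_plus. apply sumR_le. intros j Hj.
    destruct (Hedges j Hj) as [Hs [Hd Hne]].
    assert (Hk := Hcoord _ (idx_k j Hj)).
    assert (Hy : Rabs (Yv t v j - Yv t (w t) j) <= 2 * δ).
    { unfold Yv, Xc. assert (H1 := Hcoord _ (idx_z _ Hd)). assert (H2 := Hcoord _ (idx_z _ Hs)).
      apply Rabs_le_between in H1. apply Rabs_le_between in H2. apply Rabs_le. lra. }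
    assert (Hm := Hmin j Hj δ Hδ).
    assert (HT := term_bound (Yv t (w t) j) (Yv t v j) (kap t j) (kap_v v j) c δ ltac:(lra) Hk Hy Hm).
    lra. }
  unfold B. lra.
Qed.

Lemma kap_fil t d j : (j < ell)%nat -> filippov_set D (est_field n r ell src dst gamma phi t) (w t) d ->
  0 <= d (n * r + (j * r + p))%nat.
Proof.
  intros Hj Hf.
  assert (H := fil_bound D _ (w t) d 1 (fun _ => -1) (fun _ => (n * r + (j * r + p))%nat) 0 (fun _ => 0) (fun i => i)
      0 0 1 HD Hf ltac:(lra) ltac:(lra) ltac:(intros; apply idx_k; auto) ltac:(intros; lia)).
  unfold lf in H; simpl in H. assert (-1 * d (n * r + (j * r + p))%nat <= 0). 
  { replace (-1 * d (n * r + (j * r + p))%nat) with (0 + -1 * d (n * r + (j * r + p))%nat + 0) by ring. apply H.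
    intros δ Hδ v Hv. rewrite field_k by auto. assert (0 <= Rabs (est_y n r src dst phi t v (j * r + p)%nat)) by apply Rabs_pos. lra. }
  lra.
Qed.

Definition V s := / 2 * sumR n (fun i => Q s i * Q s i) + / 2 * sumR ell (fun j => (kap s j - c) * (kap s j - c)).

Lemma V_der t : t > t0 -> ~ Z t -> exists l, derivable_pt_lim V t l /\ l <= - gamma * sumR n (fun i => Q t i * Q t i).
Proof.
  intros Ht nZ. destruct (Hder t Ht nZ) as [d [Hdd Hf]].
  set (dX := fun i => d (i * r + p)%nat + phi' t (i * r + p)%nat).
  set (dXb := / INR n * sumR n dX).
  set (dQ := fun i => dX i - dXb).
  set (dk := fun j => d (n * r + (j * r + p))%nat).
  assert (HdX : forall i, (i < n)%nat -> derivable_pt_lim (fun s => Xs s i) t (dX i)).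
  { intros i Hi. apply (dplus (fun s => w s (i * r + p)%nat) (fun s => phi s (i * r + p)%nat)).
    apply Hdd, idx_z; auto. apply Hphid. nia. }
  assert (HdXb : derivable_pt_lim Xb t dXb).
  { apply (dscal _ (fun s => sumR n (Xs s))). apply (dsum n (fun i s => Xs s i)). auto. }
  assert (HdQ : forall i, (i < n)%nat -> derivable_pt_lim (fun s => Q s i) t (dQ i)).
  { intros i Hi. apply (dminus (fun s => Xs s i) Xb); auto. }
  assert (Hdk : forall j, (j < ell)%nat -> derivable_pt_lim (fun s => kap s j - c) t (dk j - 0)).
  { intros j Hj. apply (dminus (fun s => kap s j) (fun _ => c)). apply Hdd, idx_k; auto. apply dconst. }
  exists (/2 * sumR n (fun i => dQ i * Q t i + Q t i * dQ i) + /2 * sumR ell (fun j => (dk j - 0) * (kap t j - c) + (kap t j - c) * (dk j - 0))).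
  split.
  { apply (dplus (fun s => / 2 * sumR n (fun i => Q s i * Q s i)) (fun s => / 2 * sumR ell (fun j => (kap s j - c) * (kap s j - c)))).
    - apply (dscal _ (fun s => sumR n (fun i => Q s i * Q s i))). apply (dsum n (fun i s => Q s i * Q s i)).
      intros i Hi. apply (dmul (fun s => Q s i) (fun s => Q s i)); auto.
    - apply (dscal _ (fun s => sumR ell (fun j => (kap s j - c) * (kap s j - c)))). apply (dsum ell (fun j s => (kap s j - c) * (kap s j - c))).
      intros j Hj. apply (dmul (fun s => kap s j - c) (fun s => kap s j - c)); auto. }
  assert (E1 : /2 * sumR n (fun i => dQ i * Q t i + Q t i * dQ i) = sumR n (fun i => Q t i * d (i * r + p)%nat) + sumR n (fun i => Q t i * phi' t (i * r + p)%nat)).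
  { rewrite <- sumR_scal.
    rewrite (sumR_ext n (fun i => /2 * (dQ i * Q t i + Q t i * dQ i)) (fun i => (Q t i * d (i * r + p)%nat + Q t i * phi' t (i * r + p)%nat) - dXb * Q t i))
      by (intros i Hi; unfold dQ, dX; field).
    rewrite sumR_minus, sumR_plus, sumR_scal, sumQ0. ring. }
  assert (E2 : /2 * sumR ell (fun j => (dk j - 0) * (kap t j - c) + (kap t j - c) * (dk j - 0)) = lf ell (fun j => kap t j - c) (fun j => (n * r + (j * r + p))%nat) d).
  { unfold lf. rewrite <- sumR_scal. apply sumR_ext. intros. unfold dk; field. }
  rewrite E1, E2.
  assert (HV := V_fil t d Ht Hf). unfold lf at 1 in HV.
  assert (E3 : sumR n (fun i => Q t i * w t (i * r + p)%nat) = sumR n (fun i => Q t i * Q t i) - sumR n (fun i => Q t i * phi t (i * r + p)%nat)).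
  { rewrite (sumR_ext n (fun i => Q t i * w t (i * r + p)%nat) (fun i => Q t i * Q t i - Q t i * phi t (i * r + p)%nat + Xb t * Q t i))
      by (intros i Hi; unfold Q, Xs; ring).
    rewrite sumR_plus, sumR_minus, sumR_scal, sumQ0. ring. }
  assert (Hb : Rabs (sumR n (fun i => (Xs t i - / INR n * sumR n (Xs t)) * (gamma * phi t (i * r + p)%nat + phi' t (i * r + p)%nat)))
     <= C1 * (gamma * vphi + dvphi) * sumR ell (fun j => Rabs (Xs t (dst j) - Xs t (src j)))).
  { apply HC1. nra. intros e He. destruct (HA2 t ltac:(lra) (e * r + p)%nat ltac:(nia)) as [Ha Hb].
    rewrite (BTI_eq n r ell src dst p Hp Hedges) in Ha, Hb by auto.
    replace (gamma * phi t (dst e * r + p)%nat + phi' t (dst e * r + p)%nat - (gamma * phi t (src e * r + p)%nat + phi' t (src e * r + p)%nat))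
      with (gamma * (phi t (dst e * r + p)%nat - phi t (src e * r + p)%nat) + (phi' t (dst e * r + p)%nat - phi' t (src e * r + p)%nat)) by ring.
    eapply Rle_trans; [apply Rabs_triang|]. rewrite Rabs_mult, (Rabs_right gamma) by lra.
    assert (gamma * Rabs (phi t (dst e * r + p)%nat - phi t (src e * r + p)%nat) <= gamma * vphi) by (apply Rmult_le_compat_l; lra). lra. }
  apply Rabs_le_between in Hb.
  assert (E4 : sumR n (fun i => (Xs t i - / INR n * sumR n (Xs t)) * (gamma * phi t (i * r + p)%nat + phi' t (i * r + p)%nat))
     = gamma * sumR n (fun i => Q t i * phi t (i * r + p)%nat) + sumR n (fun i => Q t i * phi' t (i * r + p)%nat)).
  { rewrite <- (sumR_scal n gamma (fun i => Q t i * phi t (i * r + p)%nat)), <- sumR_plus. apply sumR_ext. intros; unfold Q, Xb; ring. }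
  assert (E5 : sumR ell (fun j => Rabs (Xs t (dst j) - Xs t (src j))) = sumR ell (fun j => Rabs (Yv t (w t) j))) by auto.
  rewrite E4, E5 in Hb. rewrite E3 in HV. fold c in Hb.
  nra.
Qed.

Lemma ac_minus' f g a b : abs_cont f a b -> abs_cont g a b -> abs_cont (fun s => f s - g s) a b.
Proof. intros Hf Hg'. apply (ac_ext (fun s => f s + -1 * g s)). intros; ring. apply ac_plus; auto. apply ac_scal; auto. Qed.

Lemma ac_V a b : t0 < a -> a <= b -> abs_cont V a b.
Proof.
  intros Ha Hab.
  assert (HX : forall i, (i < n)%nat -> abs_cont (fun s => Xs s i) a b).
  { intros i Hi. apply (ac_plus (fun s => w s (i * r + p)%nat) (fun s => phi s (i * r + p)%nat)).
    apply ac_w; auto. apply idx_z; auto. apply (ac_C1 _ (fun s => phi' s (i * r + p)%nat)); auto; intros; [apply Hphid|apply Hphic]; nia. }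
  assert (HXb : abs_cont Xb a b) by (apply (ac_scal _ (fun s => sumR n (Xs s))); apply (ac_sum n (fun i s => Xs s i)); auto).
  assert (HQ : forall i, (i < n)%nat -> abs_cont (fun s => Q s i) a b) by (intros; apply (ac_minus' (fun s => Xs s i) Xb); auto).
  apply (ac_plus (fun s => / 2 * sumR n (fun i => Q s i * Q s i)) (fun s => / 2 * sumR ell (fun j => (kap s j - c) * (kap s j - c)))).
  - apply (ac_scal _ (fun s => sumR n (fun i => Q s i * Q s i))). apply (ac_sum n (fun i s => Q s i * Q s i)).
    intros i Hi. apply (ac_mult (fun s => Q s i) (fun s => Q s i)); auto.
  - apply (ac_scal _ (fun s => sumR ell (fun j => (kap s j - c) * (kap s j - c)))). apply (ac_sum ell (fun j s => (kap s j - c) * (kap s j - c))).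
    intros j Hj. assert (abs_cont (fun s => kap s j - c) a b).
    { apply (ac_minus' (fun s => kap s j) (fun _ => c)). apply ac_w; auto. apply idx_k; auto. apply ac_const. }
    apply (ac_mult (fun s => kap s j - c) (fun s => kap s j - c)); auto.
Qed.

Definition W s := sumR n (fun i => Q s i * Q s i).

Lemma V_dec a b eta : t0 < a -> a <= b -> (forall t, a <= t <= b -> eta <= W t) -> V b <= V a - gamma * eta * (b - a).
Proof.
  intros Ha Hab HW.
  assert (H := mono (fun s => V s + gamma * eta * s) a b Z Hab HZ).
  assert (V b + gamma * eta * b <= V a + gamma * eta * a); [|lra].
  apply H. apply ac_plus. apply ac_V; auto. apply ac_scal. apply (ac_lip _ _ _ 1); [lra|]. intros; lra.
  intros t Ht nZ. destruct (V_der t ltac:(lra) nZ) as [l [Hl Hle]].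
  exists (l + gamma * eta * 1). split. apply (dplus V (fun s => gamma * eta * s)); auto. apply dscal. apply derivable_pt_lim_id.
  specialize (HW t Ht). unfold W in HW. nra.
Qed.

Lemma W_nonneg s : 0 <= W s.
Proof. apply sumR_nonneg. intros; apply Rle_0_sqr. Qed.

Lemma V_nonneg s : 0 <= V s.
Proof. unfold V. assert (0 <= sumR n (fun i => Q s i * Q s i)) by (apply sumR_nonneg; intros; apply Rle_0_sqr).
  assert (0 <= sumR ell (fun j => (kap s j - c) * (kap s j - c))) by (apply sumR_nonneg; intros; apply Rle_0_sqr). apply Rplus_le_le_0_compat; apply Rmult_le_pos; lra. Qed.

Lemma kap_mono j a b : (j < ell)%nat -> t0 < a -> a <= b -> kap a j <= kap b j.
Proof.
  intros Hj Ha Hab.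
  assert (H := mono (fun s => -1 * kap s j) a b Z Hab HZ).
  assert (-1 * kap b j <= -1 * kap a j); [|lra].
  apply H. apply ac_scal. apply ac_w; auto. apply idx_k; auto.
  intros t Ht nZ. destruct (Hder t ltac:(lra) nZ) as [d [Hdd Hf]].
  exists (-1 * d (n * r + (j * r + p))%nat). split. apply dscal. apply Hdd, idx_k; auto.
  assert (H0 := kap_fil t d j Hj Hf). lra.
Qed.

Lemma inc_cauchy (f : R -> R) t1 M : (forall a b, t1 <= a <= b -> f a <= f b) -> (forall t, t1 <= t -> f t <= M) ->
  forall eta, eta > 0 -> exists T, t1 <= T /\ forall t s, T <= t -> T <= s -> Rabs (f t - f s) < eta.
Proof.
  intros Hinc Hb eta He.
  set (E := fun y => exists t, t1 <= t /\ y = f t).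
  assert (HbE : bound E) by (exists M; intros y [t [Ht ->]]; apply Hb; auto).
  assert (HnE : exists y, E y) by (exists (f t1); exists t1; split; [lra|auto]).
  destruct (completeness E HbE HnE) as [L [HL1 HL2]].
  assert (Hup : forall t, t1 <= t -> f t <= L) by (intros t Ht; apply HL1; exists t; split; auto).
  assert (HT : exists T, t1 <= T /\ L - eta < f T).
  { apply NNPP. intros Hnn. assert (L <= L - eta); [|lra]. apply HL2. intros y [t [Ht ->]].
    apply Rnot_lt_le. intros Hlt. apply Hnn. exists t; split; auto. }
  destruct HT as [T [HT1 HT2]]. exists T. split; auto. intros t s' Ht Hs.
  assert (f T <= f t) by (apply Hinc; lra). assert (f T <= f s') by (apply Hinc; lra).
  assert (f t <= L) by (apply Hup; lra). assert (f s' <= L) by (apply Hup; lra).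
  apply Rabs_def1; lra.
Qed.

Lemma sq_bound x M : 0 <= M -> x * x <= M -> Rabs x <= M + 1.
Proof. intros HM Hx. destruct (Rle_dec (Rabs x) 1). lra.
  assert (Rabs x * Rabs x = x * x) by (rewrite <- Rabs_mult; apply Rabs_right; nra). nra. Qed.

Lemma W_eq s : W s = 2 * V s - sumR ell (fun j => (kap s j - c) * (kap s j - c)).
Proof. unfold W, V. field. Qed.

Lemma W_cauchy : forall eta, eta > 0 -> exists T, T > t0 /\ forall t s, T <= t -> T <= s -> Rabs (W t - W s) < eta.
Proof.
  intros eta He. set (t1 := t0 + 1). set (B := 2 * V t1 + 1).
  assert (HV1 : 0 <= V t1) by apply V_nonneg.
  assert (HVle : forall t, t1 <= t -> V t <= V t1).
  { intros t Ht. assert (H := V_dec t1 t 0 ltac:(unfold t1; lra) Ht ltac:(intros; apply W_nonneg)). lra. }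
  assert (HkB : forall t j, t1 <= t -> (j < ell)%nat -> Rabs (kap t j - c) <= B).
  { intros t j Ht Hj. unfold B. apply sq_bound. lra.
    assert ((kap t j - c) * (kap t j - c) <= sumR ell (fun j => (kap t j - c) * (kap t j - c))).
    { apply (sumR_ge_term ell (fun j => (kap t j - c) * (kap t j - c))); auto. intros; apply Rle_0_sqr. }
    assert (0 <= sumR n (fun i => Q t i * Q t i)) by (apply sumR_nonneg; intros; apply Rle_0_sqr).
    specialize (HVle t Ht). unfold V in HVle. unfold V. lra. }
  assert (HB0 : 0 <= B) by (unfold B; lra).
  assert (Hl0 : 0 <= INR ell) by apply pos_INR.
  set (eta' := eta / (3 + 2 * B * INR ell)).
  assert (Hden : 0 < 3 + 2 * B * INR ell) by nra.
  assert (He' : eta' > 0) by (unfold eta'; apply Rdiv_lt_0_compat; lra).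
  assert (Hee : eta' * (3 + 2 * B * INR ell) = eta) by (unfold eta'; field; lra).
  destruct (inc_cauchy (fun s => - V s) t1 0) with (eta := eta') as [TV [HTV1 HTV]]; auto.
  { intros a b Hab. assert (H := V_dec a b 0 ltac:(unfold t1 in *; lra) ltac:(lra) ltac:(intros; apply W_nonneg)). lra. }
  { intros t _. assert (H := V_nonneg t). lra. }
  destruct (fin_max (fun j T => t1 <= T /\ forall t s, T <= t -> T <= s -> Rabs (kap t j - kap s j) < eta') ell) as [TK [_ HTK]].
  { intros j T T' HTT [H1 H2]. split. lra. intros t s Ht Hs. apply H2; lra. }
  { intros j Hj. destruct (inc_cauchy (fun s => kap s j) t1 (c + B)) with (eta := eta') as [T [HT1 HT2]]; auto.
    - intros a b Hab. apply kap_mono; auto. unfold t1 in *; lra. lra.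
    - intros t Ht. specialize (HkB t j Ht Hj). apply Rabs_le_between in HkB. lra.
    - exists T. split; auto. }
  exists (Rmax TV (Rmax TK t1)).
  pose proof (Rmax_l TV (Rmax TK t1)). pose proof (Rmax_r TV (Rmax TK t1)). pose proof (Rmax_l TK t1). pose proof (Rmax_r TK t1).
  split. unfold t1 in *; lra.
  intros t s Ht Hs. rewrite !W_eq.
  assert (HVd : Rabs (- V t - - V s) < eta') by (apply HTV; lra).
  rewrite Rabs_minus_sym in HVd. replace (- V s - - V t) with (V t - V s) in HVd by ring.
  assert (Hsum : Rabs (sumR ell (fun j => (kap t j - c) * (kap t j - c)) - sumR ell (fun j => (kap s j - c) * (kap s j - c))) <= INR ell * (2 * B * eta')).
  { rewrite <- sumR_minus, <- sumR_const. eapply Rle_trans; [apply sumR_abs|]. apply sumR_le. intros j Hj.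
    destruct (HTK j Hj) as [HT1 HT2]. assert (Hk := HT2 t s ltac:(lra) ltac:(lra)).
    assert (Hb1 := HkB t j ltac:(lra) Hj). assert (Hb2 := HkB s j ltac:(lra) Hj).
    replace ((kap t j - c) * (kap t j - c) - (kap s j - c) * (kap s j - c)) with ((kap t j - kap s j) * ((kap t j - c) + (kap s j - c))) by ring.
    rewrite Rabs_mult. assert (Rabs ((kap t j - c) + (kap s j - c)) <= 2 * B) by (eapply Rle_trans; [apply Rabs_triang|]; lra).
    assert (0 <= Rabs (kap t j - kap s j)) by apply Rabs_pos.
    assert (Rabs (kap t j - kap s j) * Rabs ((kap t j - c) + (kap s j - c)) <= eta' * (2 * B)).
    { apply Rmult_le_compat; try lra. apply Rabs_pos. }
    lra. }
  apply Rabs_le_between in Hsum. apply Rabs_def2 in HVd.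
  apply Rabs_def1; nra.
Qed.

Lemma W_lim : forall eps, eps > 0 -> exists T, forall t, t >= T -> W t < eps.
Proof.
  intros eps He. destruct (W_cauchy (eps / 2) ltac:(lra)) as [T [HT HTc]].
  exists T. intros t Ht. apply Rnot_ge_lt. intros Hge.
  assert (Hall : forall s, T <= s -> eps / 2 <= W s).
  { intros s Hs. assert (H := HTc s t Hs ltac:(lra)). apply Rabs_def2 in H. lra. }
  set (Δ := 2 * (V T + 1) / (gamma * eps)).
  assert (HVT := V_nonneg T).
  assert (HΔ : Δ * (gamma * eps) = 2 * (V T + 1)) by (unfold Δ; field; nra).
  assert (HΔ0 : 0 <= Δ) by (unfold Δ; apply Rmult_le_pos; [lra| left; apply Rinv_0_lt_compat; nra]).
  assert (H := V_dec T (T + Δ) (eps / 2) HT ltac:(lra) ltac:(intros; apply Hall; lra)).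
  assert (H0 := V_nonneg (T + Δ)). nra.
Qed.

Lemma coord_lim i : (i < n)%nat -> forall eps, eps > 0 -> exists T, forall t, t >= T -> Rabs (xtilde n r phi w t (i * r + p)%nat) < eps.
Proof.
  intros Hi eps He.
  destruct (W_lim ((eps/2) * (eps/2)) ltac:(nra)) as [T1 HT1].
  destruct (Zs_lim (eps/2) ltac:(lra)) as [T2 HT2].
  exists (Rmax T1 T2). intros t Ht. pose proof (Rmax_l T1 T2). pose proof (Rmax_r T1 T2).
  rewrite (xtilde_eq n r phi p Hp w t i Hi).
  assert (Hn' : INR n >= 1) by (apply Rle_ge; apply (le_INR 1); lia).
  assert (E : Xc r phi p t (w t) i - / INR n * sumR n (fun i' => phi t (i' * r + p)%nat) = Q t i + / INR n * Zs t).
  { unfold Q, Xb, Zs, Xc. unfold Xs at 2. 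
    rewrite (sumR_plus n (fun i0 => w t (i0 * r + p)%nat) (fun i0 => phi t (i0 * r + p)%nat)). unfold Xs. field. lra. }
  rewrite E.
  assert (HW := HT1 t ltac:(lra)). assert (HZ2 := HT2 t ltac:(lra)).
  assert (HQ : Q t i * Q t i <= W t) by (apply (sumR_ge_term n (fun i => Q t i * Q t i)); auto; intros; apply Rle_0_sqr).
  assert (HQa : Rabs (Q t i) < eps / 2).
  { apply Rnot_ge_lt. intros Hge. assert (Rabs (Q t i) * Rabs (Q t i) = Q t i * Q t i) by (rewrite <- Rabs_mult; apply Rabs_right; apply Rle_ge, Rle_0_sqr). nra. }
  assert (HZa : Rabs (/ INR n * Zs t) < eps / 2).
  { rewrite Rabs_mult, Rabs_inv, (Rabs_right (INR n)) by lra.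
    assert (0 < / INR n <= 1). { split. apply Rinv_0_lt_compat; lra. rewrite <- Rinv_1. apply Rinv_le_contravar; lra. }
    assert (0 <= Rabs (Zs t)) by apply Rabs_pos. nra. }
  eapply Rle_lt_trans; [apply Rabs_triang|]. lra.
Qed.
End Main.


Theorem theorem1 (n r ell : nat) (src dst : nat -> nat) (phi phi' : R -> nat -> R)
  (gamma t0 : R) (w : R -> nat -> R) :
  (* (A1) *)
  connected_undirected n ell src dst ->
  (* phi continuously differentiable, with derivative phi' *)
  (forall k t, (k < n * r)%nat -> derivable_pt_lim (fun s => phi s k) t (phi' t k)) ->
  (forall k t, (k < n * r)%nat -> continuity_pt (fun s => phi' s k) t) ->
  (* (A2) *)
  (exists vphi dvphi : R, forall t, 0 <= t -> forall a, (a < ell * r)%nat ->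
      Rabs (matvec (n * r) (BTI r src dst) (phi t) a) <= vphi /\
      Rabs (matvec (n * r) (BTI r src dst) (phi' t) a) <= dvphi) ->
  gamma > 0 -> 0 <= t0 ->
  (* kappa_j(t0) >= 1; z(t0) = z0 is arbitrary *)
  (forall j, (j < ell * r)%nat -> w t0 (n * r + j)%nat >= 1) ->
  filippov_solution (n * r + ell * r) (est_field n r ell src dst gamma phi) t0 w ->
  forall k, (k < n * r)%nat ->
    forall eps, eps > 0 -> exists T, forall t, t >= T -> Rabs (xtilde n r phi w t k) < eps.
Proof.
  intros [Hedges [_ [_ Hreach]]] Hphid Hphic [vphi [dvphi HA2]] Hg Ht0 _ [Hac [Z [HZ Hder]]] k Hk eps He.
  assert (Hr : (r > 0)%nat) by (destruct r; lia).
  assert (Hn : (n > 0)%nat) by (destruct n; lia).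
  set (i := (k / r)%nat). set (p := (k mod r)%nat).
  assert (Hp : (p < r)%nat) by (apply Nat.mod_upper_bound; lia).
  assert (Hki : k = (i * r + p)%nat) by (unfold i, p; rewrite (Nat.div_mod k r) at 1 by lia; lia).
  assert (Hi : (i < n)%nat) by nia.
  destruct (Qh_bound n ell src dst Hn Hreach) as [C1 [HC10 HC1]].
  rewrite Hki.
  assert (HA2' : forall t, 0 <= t -> forall a, (a < ell * r)%nat ->
      Rabs (matvec (n * r) (BTI r src dst) (phi t) a) <= Rmax 0 vphi /\
      Rabs (matvec (n * r) (BTI r src dst) (phi' t) a) <= Rmax 0 dvphi).
  { intros t Ht a Ha. destruct (HA2 t Ht a Ha) as [H1 H2].
    split; eapply Rle_trans; try eassumption; apply Rmax_r. }
  apply (coord_lim n r ell src dst phi phi' gamma t0 w Hedges Hphid Hphic (Rmax 0 vphi) (Rmax 0 dvphi) HA2' Hg Ht0 Hac Z (null1_of_nullD Z HZ) Hder p Hp Hn C1 HC1 (Rmax_l _ _) (Rmax_l _ _) i Hi eps He).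
Qed.
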